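(* Let $n\in\mathbb{N}$ and let $u$, $F_n$, $G_{n-1}$, $H_n$ be as follows: $u$ is a smooth complex-valued function on $\mathbb{R}$; $F_n(z,x)=\sum_{j=0}^n f_{n-j}(x)z^j$, $H_n(z,x)=\sum_{j=0}^n h_{n-j}(x)z^j$ with $f_0=h_0=1$, $G_{n-1}(z,x)=\sum_{j=0}^{n-1}g_{n-1-j}(x)z^j$, with smooth coefficients, satisfying for all $z$, $x$: $F_{n,x}=-iu_xF_n-2izG_{n-1}$, $H_{n,x}=iu_xH_n+2izG_{n-1}$, $G_{n-1,x}=i(H_n-F_n)$, and $z^2G_{n-1}^2+zF_nH_n=R_{2n+1}(z)=\prod_{m=0}^{2n}(z-E_m)$ independent of $x$, where $E_0=0$ and $E_0,\dots,E_{2n}$ are pairwise distinct. Let $\mathcal{K}_n$ be the (nonsingular) curve $y^2=R_{2n+1}(z)$ compactified by $P_\infty$. Write $F_n(z,x)=\prod_{j=1}^n(z-\mu_j(x))$, $H_n(z,x)=\prod_{j=1}^n(z-\nu_j(x))$ and set $\hat\mu_j(x)=(\mu_j(x),-\mu_j(x)G_{n-1}(\mu_j(x),x))\in\mathcal{K}_n$, $\hat\nu_j(x)=(\nu_j(x),\nu_j(x)G_{n-1}(\nu_j(x),x))\in\mathcal{K}_n$. Suppose the zeros $\mu_1(x),\dots,\mu_n(x)$ are pairwise distinct for $x\in\Omega$, where $\Omega\subseteq\mathbb{R}$ is an open interval. Then $$\mu_{j,x}(x)=-2i\frac{y(\hat\mu_j(x))}{\prod_{\ell=1,\ell\neq j}^n(\mu_j(x)-\mu_\ell(x))},\qquad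 j=1,\dots,n,\ x\in\Omega,$$ and for any fixed $x_0\in\Omega$ and initial conditions $\hat\mu_j(x_0)\in\mathcal{K}_n$, $j=1,\dots,n$, this initial value problem has a unique solution $\{\hat\mu_j(x)\}_{j=1}^n$ with $\hat\mu_j\in C^\infty(\Omega,\mathcal{K}_n)$. The identical statements hold with $\mu$ replaced by $\nu$ (assuming the $\nu_j(x)$ pairwise distinct on $\Omega$); in particular $\nu_{j,x}(x)=-2i\,y(\hat\nu_j(x))/\prod_{\ell=1,\ell\neq j}^n(\nu_j(x)-\nu_\ell(x))$.
   Context: $y(P)$ denotes the meromorphic function on $\mathcal{K}_n$ with $y^2=R_{2n+1}(z)$; points of $\mathcal{K}_n\setminus\{P_\infty\}$ are written $P=(z,y)$. *)

(* Defs.v *)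
From Stdlib Require Import Reals.
From Coquelicot Require Import Coquelicot.

Open Scope C_scope.

Fixpoint csum (m : nat) (a : nat -> C) : C :=
  match m with O => 0 | S k => csum k a + a k end.
Fixpoint cprod (m : nat) (a : nat -> C) : C :=
  match m with O => 1 | S k => cprod k a * a k end.
Fixpoint cpow (z : C) (k : nat) : C :=
  match k with O => 1 | S k' => cpow z k' * z end.

Definition cprod_ne (n j : nat) (a : nat -> C) : C :=
  cprod n (fun k => if Nat.eqb (S k) j then 1 else a (S k)).

Definition cpolyN (c : nat -> R -> C) (m : nat) (z : C) (x : R) : C :=
  csum m (fun j => c (m - 1 - j)%nat x * cpow z j).

Definition Rpoly (n : nat) (E : nat -> C) (z : C) : C :=
  cprod (2 * n + 1) (fun m => z - E m).
Definition dRpoly (n : nat) (E : nat -> C) (z : C) : C :=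
  csum (2 * n + 1) (fun m =>
    cprod (2 * n + 1) (fun k => if Nat.eqb k m then 1 else z - E k)).

Definition smoothR_on (Om : R -> Prop) (g : R -> R) : Prop :=
  forall (k : nat) (x : R), Om x -> ex_derive_n g k x.
Definition smoothC_on (Om : R -> Prop) (g : R -> C) : Prop :=
  smoothR_on Om (fun x => Re (g x)) /\ smoothR_on Om (fun x => Im (g x)).
Definition smoothC (g : R -> C) : Prop := smoothC_on (fun _ => True) g.
Definition is_deriveC (g : R -> C) (x : R) (l : C) : Prop :=
  is_derive (fun t => Re (g t)) x (Re l) /\ is_derive (fun t => Im (g t)) x (Im l).
Definition DeriveC (g : R -> C) (x : R) : C :=
  (Derive (fun t => Re (g t)) x, Derive (fun t => Im (g t)) x).
Definition continuousC_at (g : R -> C) (x : R) : Prop :=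
  continuity_pt (fun t => Re (g t)) x /\ continuity_pt (fun t => Im (g t)) x.

Definition open_rbar_interval (a b : Rbar) (x : R) : Prop :=
  Rbar_lt a x /\ Rbar_lt x b.

(* Points of K_n \ {P_oo} are pairs (z,y) with y^2 = R_{2n+1}(z);
   y(P) = snd P.  A family p_1..p_n of curves x |-> p j x = (z_j(x), y_j(x)).
   The Dubrovin vector field on K_n, written in the affine coordinates (z,y):
     z_j' = -2i y_j / prod_{l<>j} (z_j - z_l),
     y_j' = -i R'(z_j) / prod_{l<>j} (z_j - z_l)
   (the y-equation is the one induced on K_n by y^2 = R(z)). *)
Definition dub_denom (n : nat) (p : nat -> C * C) (j : nat) : C :=
  cprod_ne n j (fun l => fst (p j) - fst (p l)).

Definition dubrovin_solution (n : nat) (E : nat -> C) (Om : R -> Prop)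
    (p : nat -> R -> C * C) : Prop :=
  forall j : nat, (1 <= j <= n)%nat ->
    smoothC_on Om (fun x => fst (p j x)) /\
    smoothC_on Om (fun x => snd (p j x)) /\
    forall x : R, Om x ->
      snd (p j x) * snd (p j x) = Rpoly n E (fst (p j x)) /\
      (forall l : nat, (1 <= l <= n)%nat -> l <> j -> fst (p j x) <> fst (p l x)) /\
      is_deriveC (fun t => fst (p j t)) x
        (- (2 * Ci) * snd (p j x) / dub_denom n (fun k => p k x) j) /\
      is_deriveC (fun t => snd (p j t)) x
        (- Ci * dRpoly n E (fst (p j x)) / dub_denom n (fun k => p k x) j).

Definition lemma_conclusion (n : nat) (E : nat -> C) (Om : R -> Prop)
    (r : nat -> R -> C) (rhat : nat -> R -> C * C) : Prop :=
  (forall j x, (1 <= j <= n)%nat -> Om x ->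
     is_deriveC (r j) x
       (- (2 * Ci) * snd (rhat j x) / cprod_ne n j (fun l => r j x - r l x))) /\
  dubrovin_solution n E Om rhat /\
  (forall (x0 : R) (p : nat -> R -> C * C), Om x0 ->
     dubrovin_solution n E Om p ->
     (forall j, (1 <= j <= n)%nat -> p j x0 = rhat j x0) ->
     forall j x, (1 <= j <= n)%nat -> Om x -> p j x = rhat j x).

(* Main.v *)
Require Import Defs.
From Stdlib Require Import Reals Lra Lia FunctionalExtensionality.
From Coquelicot Require Import Coquelicot.
Open Scope C_scope.


Open Scope C_scope.
Open Scope C_scope.

Lemma dR_mult (f g : R -> R) x a b : is_derive f x a -> is_derive g x b ->
  is_derive (fun t => (f t * g t)%R) x (a * g x + f x * b)%R.
Proof. intros. apply (is_derive_mult f g x a b); auto. intros; apply Rmult_comm. Qed.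
Lemma dR_plus (f g : R -> R) x a b : is_derive f x a -> is_derive g x b ->
  is_derive (fun t => (f t + g t)%R) x (a + b)%R.
Proof. intros. apply (is_derive_plus f g x a b); auto. Qed.
Lemma dR_minus (f g : R -> R) x a b : is_derive f x a -> is_derive g x b ->
  is_derive (fun t => (f t - g t)%R) x (a - b)%R.
Proof. intros. apply (is_derive_minus f g x a b); auto. Qed.
Lemma dR_const (c : R) x : is_derive (fun _ => c) x 0%R.
Proof. apply (is_derive_const c x). Qed.
Lemma dR_id x : is_derive (fun t => t) x 1%R.
Proof. apply (is_derive_id x). Qed.
Lemma dR_ext_loc (f g : R -> R) x l : locally x (fun t => f t = g t) -> is_derive f x l -> is_derive g x l.
Proof. intros; eapply is_derive_ext_loc; eauto. Qed.
Lemma dR_eq (f : R -> R) x l l' : is_derive f x l -> l = l' -> is_derive f x l'.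
Proof. intros; subst; auto. Qed.

Lemma C_eq (a b : C) : Re a = Re b -> Im a = Im b -> a = b.
Proof. destruct a, b; unfold Re, Im; simpl; intros; subst; auto. Qed.

Lemma dC_eq g x l l' : is_deriveC g x l -> l = l' -> is_deriveC g x l'.
Proof. intros; subst; auto. Qed.
Lemma dC_ext_loc (f g : R -> C) x l : locally x (fun t => f t = g t) -> is_deriveC f x l -> is_deriveC g x l.
Proof. intros H [H1 H2]. split; eapply dR_ext_loc; eauto;
  eapply filter_imp; eauto; intros; simpl; congruence. Qed.
Lemma dC_ext (f g : R -> C) x l : (forall t, f t = g t) -> is_deriveC f x l -> is_deriveC g x l.
Proof. intros H. apply dC_ext_loc. apply filter_forall; auto. Qed.
Lemma dC_unique f x l1 l2 : is_deriveC f x l1 -> is_deriveC f x l2 -> l1 = l2.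
Proof. intros [A B] [C D]. apply C_eq.
  apply is_derive_unique in A; apply is_derive_unique in C; congruence.
  apply is_derive_unique in B; apply is_derive_unique in D; congruence. Qed.
Lemma dC_const (c : C) x : is_deriveC (fun _ => c) x 0.
Proof. split; apply dR_const. Qed.
Lemma dC_RtoC x : is_deriveC (fun t => RtoC t) x 1.
Proof. split; unfold Re, Im; simpl. apply dR_id. apply dR_const. Qed.
Lemma dC_plus f g x a b : is_deriveC f x a -> is_deriveC g x b ->
  is_deriveC (fun t => f t + g t) x (a + b).
Proof. intros [A1 A2] [B1 B2]; split; unfold Re, Im in *; simpl.
  apply (dR_plus _ _ _ _ _ A1 B1). apply (dR_plus _ _ _ _ _ A2 B2). Qed.
Lemma dC_minus f g x a b : is_deriveC f x a -> is_deriveC g x b ->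
  is_deriveC (fun t => f t - g t) x (a - b).
Proof. intros [A1 A2] [B1 B2]; split; unfold Re, Im in *; simpl.
  apply (dR_minus _ _ _ _ _ A1 B1). apply (dR_minus _ _ _ _ _ A2 B2). Qed.
Lemma dC_mult f g x a b : is_deriveC f x a -> is_deriveC g x b ->
  is_deriveC (fun t => f t * g t) x (a * g x + f x * b).
Proof. intros [A1 A2] [B1 B2]; split; unfold Re, Im in *; simpl.
  eapply dR_eq. apply dR_minus; apply dR_mult; eauto. simpl; ring.
  eapply dR_eq. apply dR_plus; apply dR_mult; eauto. simpl; ring. Qed.
Lemma dC_opp f x a : is_deriveC f x a -> is_deriveC (fun t => - f t) x (- a).
Proof. intros. eapply dC_eq. eapply dC_ext. 2: apply (dC_minus _ _ x 0 a (dC_const 0 x) H).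
  intros; cbv beta; ring. ring. Qed.
Lemma dC_scal (c : C) f x a : is_deriveC f x a -> is_deriveC (fun t => c * f t) x (c * a).
Proof. intros. eapply dC_eq. apply dC_mult; eauto. apply dC_const. cbv beta; ring. Qed.


Open Scope C_scope.
Open Scope C_scope.

Lemma csum_ext m a b : (forall k, (k < m)%nat -> a k = b k) -> csum m a = csum m b.
Proof. induction m; simpl; intros; auto. rewrite IHm; auto. rewrite H; auto. Qed.
Lemma cprod_ext m a b : (forall k, (k < m)%nat -> a k = b k) -> cprod m a = cprod m b.
Proof. induction m; simpl; intros; auto. rewrite IHm; auto. rewrite H; auto. Qed.
Lemma csum_mult_r m a c : csum m (fun k => a k * c) = csum m a * c.
Proof. induction m; simpl. ring. rewrite IHm. ring. Qed.
Lemma csum_mult_l m a c : csum m (fun k => c * a k) = c * csum m a.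
Proof. induction m; simpl. ring. rewrite IHm. ring. Qed.
Lemma csum_plus m a b : csum m (fun k => a k + b k) = csum m a + csum m b.
Proof. induction m; simpl. ring. rewrite IHm. ring. Qed.
Lemma csum_opp m a : csum m (fun k => - a k) = - csum m a.
Proof. induction m; simpl. ring. rewrite IHm. ring. Qed.

Lemma dC_csum m (a : nat -> R -> C) da x :
  (forall k, (k < m)%nat -> is_deriveC (a k) x (da k)) ->
  is_deriveC (fun t => csum m (fun k => a k t)) x (csum m da).
Proof. induction m; intros H; simpl. apply dC_const.
  apply dC_plus; auto. Qed.

Lemma dC_cprod m (a : nat -> R -> C) da x :
  (forall k, (k < m)%nat -> is_deriveC (a k) x (da k)) ->
  is_deriveC (fun t => cprod m (fun k => a k t)) x
    (csum m (fun k => da k * cprod m (fun k' => if Nat.eqb k' k then 1 else a k' x))).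
Proof. induction m; intros H; simpl. eapply dC_eq. apply dC_const. reflexivity.
  eapply dC_eq. apply dC_mult. apply IHm; auto. apply H; lia.
  rewrite Nat.eqb_refl.
  rewrite <- csum_mult_r.
  replace (cprod m (fun k' : nat => if Nat.eqb k' m then 1 else a k' x)) with
     (cprod m (fun k => a k x)).
  2:{ apply cprod_ext. intros. destruct (Nat.eqb_spec k m); auto; lia. }
  f_equal. apply csum_ext. intros. destruct (Nat.eqb_spec m k); try lia. cbv beta; ring.
  cbv beta; ring. Qed.

Lemma dC_cpow (w : R -> C) w' x k : is_deriveC w x w' ->
  is_deriveC (fun t => cpow (w t) k) x (RtoC (INR k) * cpow (w x) (pred k) * w').
Proof. intros Hw. induction k.
  apply (dC_eq _ _ 0). apply (dC_ext (fun _ => 1)). intros; reflexivity. apply dC_const.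
  change (INR 0) with 0%R. ring.
  eapply dC_eq. apply (dC_mult (fun t => cpow (w t) k) w x); eauto.
  destruct k. change (INR 0) with 0%R. change (INR 1) with 1%R. change (pred 1) with 0%nat. change (pred 0) with 0%nat. change (cpow (w x) 0) with (RtoC 1). ring.
  assert (E : RtoC (INR (S (S k))) = RtoC (INR (S k)) + 1) by (rewrite (S_INR (S k)); apply RtoC_plus).
  rewrite E. change (cpow (w x) (S k)) with (cpow (w x) k * w x). change (pred (S (S k))) with (S k).
  change (pred (S k)) with k. change (cpow (w x) (S k)) with (cpow (w x) k * w x). ring. Qed.

Lemma contR_ext (f g : R -> R) x : (forall t, f t = g t) -> continuity_pt f x -> continuity_pt g x.
Proof. intros. replace g with f; auto. apply functional_extensionality; auto. Qed.
Lemma contC_const (c : C) x : continuousC_at (fun _ => c) x.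
Proof. split; apply continuity_pt_const; intros ? ?; auto. Qed.
Lemma contC_plus f g x : continuousC_at f x -> continuousC_at g x -> continuousC_at (fun t => f t + g t) x.
Proof. intros [A B] [C D]; split.
  apply (contR_ext (fun t => Re (f t) + Re (g t))%R); [intros; reflexivity|].
  apply (continuity_pt_plus (fun t => Re (f t)) (fun t => Re (g t))); auto.
  apply (contR_ext (fun t => Im (f t) + Im (g t))%R); [intros; reflexivity|].
  apply (continuity_pt_plus (fun t => Im (f t)) (fun t => Im (g t))); auto. Qed.
Lemma contC_opp f x : continuousC_at f x -> continuousC_at (fun t => - f t) x.
Proof. intros [A B]; split.
  apply (contR_ext (fun t => - Re (f t))%R); [intros; reflexivity|].
  apply (continuity_pt_opp (fun t => Re (f t))); auto.
  apply (contR_ext (fun t => - Im (f t))%R); [intros; reflexivity|].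
  apply (continuity_pt_opp (fun t => Im (f t))); auto. Qed.
Lemma contC_minus f g x : continuousC_at f x -> continuousC_at g x -> continuousC_at (fun t => f t - g t) x.
Proof. intros. apply contC_plus; auto. apply contC_opp; auto. Qed.
Lemma contR_mult (f g : R -> R) x : continuity_pt f x -> continuity_pt g x -> continuity_pt (fun t => f t * g t)%R x.
Proof. intros. apply (continuity_pt_mult f g); auto. Qed.
Lemma contR_minus (f g : R -> R) x : continuity_pt f x -> continuity_pt g x -> continuity_pt (fun t => f t - g t)%R x.
Proof. intros. apply (continuity_pt_minus f g); auto. Qed.
Lemma contR_plus (f g : R -> R) x : continuity_pt f x -> continuity_pt g x -> continuity_pt (fun t => f t + g t)%R x.
Proof. intros. apply (continuity_pt_plus f g); auto. Qed.
Lemma contC_mult f g x : continuousC_at f x -> continuousC_at g x -> continuousC_at (fun t => f t * g t) x.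
Proof. intros [A B] [C D]; split; unfold Re, Im in *; simpl.
  apply contR_minus; apply contR_mult; auto.
  apply contR_plus; apply contR_mult; auto. Qed.
Lemma contC_inv f x : continuousC_at f x -> f x <> 0 -> continuousC_at (fun t => / f t) x.
Proof. intros [A B] Hn.
  assert (Hd : (fst (f x) ^ 2 + snd (f x) ^ 2)%R <> 0%R).
  { intro E. apply Hn. apply C_eq; unfold Re, Im; simpl; nra. }
  assert (Hc : continuity_pt (fun t => / (fst (f t) ^ 2 + snd (f t) ^ 2))%R x).
  { apply (continuity_pt_inv (fun t => (fst (f t) ^ 2 + snd (f t) ^ 2)%R)); auto.
    simpl. apply contR_plus; simpl; apply contR_mult; auto; apply contR_mult; auto;
    apply continuity_pt_const; intros ? ?; auto. }
  split; unfold Re, Im in *; simpl.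
  unfold Rdiv. apply contR_mult; auto.
  unfold Rdiv. apply contR_mult; auto.
  apply (contR_ext (fun t => - snd (f t))%R); [intros; reflexivity|].
  apply (continuity_pt_opp (fun t => snd (f t))); auto. Qed.
Lemma contC_cprod m (a : nat -> R -> C) x :
  (forall k, (k < m)%nat -> continuousC_at (a k) x) ->
  continuousC_at (fun t => cprod m (fun k => a k t)) x.
Proof. induction m; intros H; simpl. apply contC_const.
  apply contC_mult; auto. Qed.
Lemma contC_csum m (a : nat -> R -> C) x :
  (forall k, (k < m)%nat -> continuousC_at (a k) x) ->
  continuousC_at (fun t => csum m (fun k => a k t)) x.
Proof. induction m; intros H; simpl. apply contC_const.
  apply contC_plus; auto. Qed.
Lemma contC_cpow (w : R -> C) x k : continuousC_at w x -> continuousC_at (fun t => cpow (w t) k) x.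
Proof. intros. induction k; simpl. apply contC_const. apply contC_mult; auto. Qed.
Lemma dC_cont f x l : is_deriveC f x l -> continuousC_at f x.
Proof. intros [A B]; split; apply continuity_pt_filterlim; apply (@ex_derive_continuous R_AbsRing R_NormedModule); eexists; eauto. Qed.


Open Scope C_scope.
Open Scope C_scope.

Definition isopen (Om : R -> Prop) := forall x, Om x -> locally x Om.

Fixpoint CkR (Om : R -> Prop) (k : nat) (f : R -> R) : Prop :=
  match k with O => True
  | S k => exists f', (forall x, Om x -> is_derive f x (f' x)) /\ CkR Om k f' end.

Lemma CkR_weak Om k f : CkR Om (S k) f -> CkR Om k f.
Proof. revert f; induction k; simpl; intros f [f' [H1 H2]]; auto.
  exists f'; split; auto. Qed.
Lemma CkR_weak_le Om k m f : (m <= k)%nat -> CkR Om k f -> CkR Om m f.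
Proof. induction 1; auto. intros. apply IHle. apply CkR_weak; auto. Qed.

Lemma CkR_ext Om (HO : isopen Om) k f g : (forall x, Om x -> f x = g x) -> CkR Om k f -> CkR Om k g.
Proof. destruct k; simpl; auto. intros E [f' [H1 H2]]. exists f'; split; auto.
  intros x Hx. eapply dR_ext_loc. 2: apply H1; auto.
  eapply filter_imp. 2: apply (HO x Hx). intros; apply E; auto. Qed.

Lemma CkR_const Om k c : CkR Om k (fun _ => c).
Proof. revert c; induction k; simpl; auto. intros. exists (fun _ => 0%R); split; auto.
  intros; apply dR_const. Qed.

Lemma CkR_plus Om k f g : CkR Om k f -> CkR Om k g -> CkR Om k (fun t => f t + g t)%R.
Proof. revert f g; induction k; simpl; auto. intros f g [f' [A B]] [g' [C D]].
  exists (fun t => f' t + g' t)%R; split; auto. intros; apply dR_plus; auto. Qed.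
Lemma CkR_opp Om k f : CkR Om k f -> CkR Om k (fun t => - f t)%R.
Proof. revert f; induction k; simpl; auto. intros f [f' [A B]].
  exists (fun t => - f' t)%R; split; auto. intros. apply (is_derive_opp f x (f' x)); auto. Qed.
Lemma CkR_minus Om k f g : CkR Om k f -> CkR Om k g -> CkR Om k (fun t => f t - g t)%R.
Proof. intros. apply (CkR_plus Om k f (fun t => - g t)%R); auto. apply CkR_opp; auto. Qed.
Lemma CkR_mult Om k f g : CkR Om k f -> CkR Om k g -> CkR Om k (fun t => f t * g t)%R.
Proof. revert f g; induction k; simpl; auto. intros f g [f' [A B]] [g' [C D]].
  exists (fun t => f' t * g t + f t * g' t)%R; split.
  intros; apply dR_mult; auto.
  apply CkR_plus; apply IHk; auto; apply CkR_weak; simpl; eauto. Qed.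
Lemma CkR_inv Om k g : (forall x, Om x -> g x <> 0%R) -> CkR Om k g -> CkR Om k (fun t => / g t)%R.
Proof. intros Hn. revert g Hn; induction k; simpl; auto. intros g Hn [g' [A B]].
  exists (fun t => - g' t * (/ g t * / g t))%R; split.
  intros. eapply dR_eq. apply (is_derive_inv g x (g' x)); auto. simpl. field. auto.
  apply CkR_mult. apply CkR_opp; auto. apply CkR_mult; apply IHk; auto; apply CkR_weak; simpl; eauto. Qed.

Lemma smooth_CkR Om f : smoothR_on Om f -> forall k, CkR Om k f.
Proof. intros H.
  assert (G : forall k m, CkR Om k (Derive_n f m)).
  { induction k; simpl; auto. intros m. exists (Derive_n f (S m)); split; auto.
    intros x Hx. simpl. apply Derive_correct. apply (H (S m) x Hx). }
  intros k. apply (G k 0%nat). Qed.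

Lemma CkR_smooth Om (HO : isopen Om) f : (forall k, CkR Om k f) -> smoothR_on Om f.
Proof.
  assert (G : forall k f, CkR Om (S k) f -> forall x, Om x -> ex_derive_n f (S k) x).
  { induction k; intros g [g' [A B]] x Hx; simpl.
    exists (g' x); apply A; auto.
    assert (IH := IHk g' B x Hx). simpl in IH.
    assert (E : forall t, Derive_n g (S (S k)) t = Derive_n (Derive_n g 1) (S k) t).
    { intros. rewrite Derive_n_comp. f_equal. lia. }
    apply (ex_derive_ext_loc (Derive_n g' k)).
    2: exact IH.
    eapply filter_imp. 2: apply (HO x Hx). intros y Hy.
    transitivity (Derive_n (Derive_n g 1) k y).
    2:{ rewrite Derive_n_comp, Nat.add_1_r. reflexivity. }
    symmetry. apply Derive_n_ext_loc.
    eapply filter_imp. 2: apply (HO y Hy). intros z Hz.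
    simpl. apply is_derive_unique. apply A; auto. }
  intros H k x Hx. destruct k. exact I. apply G; auto. Qed.

Definition CkC Om k (g : R -> C) := CkR Om k (fun t => Re (g t)) /\ CkR Om k (fun t => Im (g t)).

Lemma CkC_S Om k g g' : (forall x, Om x -> is_deriveC g x (g' x)) -> CkC Om k g' -> CkC Om (S k) g.
Proof. intros H [A B]; split; simpl.
  exists (fun t => Re (g' t)); split; auto. intros; apply H; auto.
  exists (fun t => Im (g' t)); split; auto. intros; apply H; auto. Qed.
Lemma CkC_weak Om k g : CkC Om (S k) g -> CkC Om k g.
Proof. intros [A B]; split; apply CkR_weak; auto. Qed.
Lemma CkC_weak_le Om k m g : (m <= k)%nat -> CkC Om k g -> CkC Om m g.
Proof. intros H [A B]; split; eapply CkR_weak_le; eauto. Qed.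
Lemma CkC_ext Om (HO : isopen Om) k f g : (forall x, Om x -> f x = g x) -> CkC Om k f -> CkC Om k g.
Proof. intros E [A B]; split; [apply (CkR_ext Om HO k (fun t => Re (f t))) | apply (CkR_ext Om HO k (fun t => Im (f t)))]; auto; intros; rewrite E; auto. Qed.
Lemma CkC_const Om k c : CkC Om k (fun _ => c).
Proof. split; apply CkR_const. Qed.
Lemma CkC_plus Om k f g : CkC Om k f -> CkC Om k g -> CkC Om k (fun t => f t + g t).
Proof. intros [A B] [C D]; split; apply CkR_plus; auto. Qed.
Lemma CkC_opp Om k f : CkC Om k f -> CkC Om k (fun t => - f t).
Proof. intros [A B]; split; apply CkR_opp; auto. Qed.
Lemma CkC_minus Om k f g : CkC Om k f -> CkC Om k g -> CkC Om k (fun t => f t - g t).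
Proof. intros [A B] [C D]; split; apply CkR_minus; auto. Qed.
Lemma CkC_mult Om k f g : CkC Om k f -> CkC Om k g -> CkC Om k (fun t => f t * g t).
Proof. intros [A B] [C D]; split; unfold Re, Im in *; simpl.
  apply CkR_minus; apply CkR_mult; auto. apply CkR_plus; apply CkR_mult; auto. Qed.
Lemma CkR_ext_all Om k f g : (forall t, f t = g t) -> CkR Om k f -> CkR Om k g.
Proof. intros E H. replace g with f; auto. apply functional_extensionality; auto. Qed.
Lemma CkC_inv Om k (g : R -> C) : (forall x, Om x -> g x <> 0) -> CkC Om k g -> CkC Om k (fun t => / g t).
Proof. intros Hn [A B].
  assert (Hd : forall x, Om x -> (Re (g x) * Re (g x) + Im (g x) * Im (g x))%R <> 0%R).
  { intros x Hx E. apply (Hn x Hx). apply C_eq; unfold Re, Im in *; simpl; nra. }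
  assert (Hc : CkR Om k (fun t => / (Re (g t) * Re (g t) + Im (g t) * Im (g t)))%R).
  { apply CkR_inv; auto. apply CkR_plus; apply CkR_mult; auto. }
  split.
  - apply CkR_ext_all with (f := fun t => (Re (g t) * / (Re (g t) * Re (g t) + Im (g t) * Im (g t)))%R).
    intros; unfold Re, Im; simpl; unfold Rdiv; f_equal; f_equal; ring.
    apply CkR_mult; auto.
  - apply CkR_ext_all with (f := fun t => (- Im (g t) * / (Re (g t) * Re (g t) + Im (g t) * Im (g t)))%R).
    intros; unfold Re, Im; simpl; unfold Rdiv; f_equal; f_equal; ring.
    apply CkR_mult; auto. apply CkR_opp; auto. Qed.
Lemma CkC_div Om k (f g : R -> C) : (forall x, Om x -> g x <> 0) -> CkC Om k f -> CkC Om k g -> CkC Om k (fun t => f t / g t).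
Proof. intros. apply (CkC_mult Om k f (fun t => / g t)); auto. apply CkC_inv; auto. Qed.
Lemma CkC_csum Om k m (a : nat -> R -> C) : (forall i, (i < m)%nat -> CkC Om k (a i)) ->
  CkC Om k (fun t => csum m (fun i => a i t)).
Proof. induction m; intros H; simpl. apply CkC_const. apply CkC_plus; auto. Qed.
Lemma CkC_cprod Om k m (a : nat -> R -> C) : (forall i, (i < m)%nat -> CkC Om k (a i)) ->
  CkC Om k (fun t => cprod m (fun i => a i t)).
Proof. induction m; intros H; simpl. apply CkC_const. apply CkC_mult; auto. Qed.
Lemma CkC_cpow Om k w j : CkC Om k w -> CkC Om k (fun t => cpow (w t) j).
Proof. intros. induction j; simpl. apply CkC_const. apply CkC_mult; auto. Qed.

Lemma smooth_CkC Om g : smoothC_on Om g -> forall k, CkC Om k g.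
Proof. intros [A B] k; split; apply smooth_CkR; auto. Qed.
Lemma CkC_smooth Om (HO : isopen Om) g : (forall k, CkC Om k g) -> smoothC_on Om g.
Proof. intros H; split; apply CkR_smooth; auto; intros k; apply H. Qed.
Lemma smoothC_on_weak Om g : smoothC g -> smoothC_on Om g.
Proof. intros [A B]; split; intros k x _; [apply A | apply B]; exact I. Qed.


Open Scope C_scope.
Open Scope C_scope.

Lemma cont_eps (f : R -> R) x : continuity_pt f x ->
  forall eps, (0 < eps)%R -> exists d, (0 < d)%R /\ forall y, (Rabs (y - x) < d)%R -> (Rabs (f y - f x) < eps)%R.
Proof. intros H eps He. destruct (H eps He) as [d [Hd H2]]. exists d; split; auto.
  intros y Hy. destruct (Req_dec y x). subst. rewrite Rminus_eq_0, Rabs_R0; auto.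
  apply (H2 y). split. split; auto. exact I. simpl. unfold R_dist. auto. Qed.

Lemma locally_R (P : R -> Prop) x d : (0 < d)%R -> (forall y, (Rabs (y - x) < d)%R -> P y) -> locally x P.
Proof. intros Hd H. exists (mkposreal d Hd). intros y Hy. apply H. apply Hy. Qed.

Lemma locR_nonzero (f : R -> R) x : continuity_pt f x -> f x <> 0%R -> locally x (fun t => f t <> 0%R).
Proof. intros H Hn. destruct (cont_eps f x H (Rabs (f x)) (Rabs_pos_lt _ Hn)) as [d [Hd H2]].
  apply (locally_R _ x d Hd). intros y Hy E. specialize (H2 y Hy). rewrite E in H2.
  rewrite Rminus_0_l, Rabs_Ropp in H2. lra. Qed.

Lemma locC_nonzero (f : R -> C) x : continuousC_at f x -> f x <> 0 -> locally x (fun t => f t <> 0).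
Proof. intros [A B] Hn.
  destruct (Req_dec (Re (f x)) 0) as [E1|E1].
  - destruct (Req_dec (Im (f x)) 0) as [E2|E2].
    + exfalso; apply Hn; apply C_eq; auto.
    + eapply filter_imp. 2: apply (locR_nonzero (fun t => Im (f t)) x B E2).
      intros t H E; apply H; rewrite E; reflexivity.
  - eapply filter_imp. 2: apply (locR_nonzero (fun t => Re (f t)) x A E1).
    intros t H E; apply H; rewrite E; reflexivity. Qed.

Open Scope R_scope.
Lemma dR_mult_zero (phi psi : R -> R) x a : phi x = 0%R -> is_derive phi x a -> continuity_pt psi x ->
  is_derive (fun t => phi t * psi t)%R x (a * psi x)%R.
Proof. intros H0 Hd Hc. apply is_derive_Reals. apply is_derive_Reals in Hd.
  intros eps He.
  set (K := (Rabs (psi x) + 1)%R).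
  assert (HK : (0 < K)%R) by (unfold K; pose proof (Rabs_pos (psi x)); lra).
  set (e1 := Rmin 1 (eps / (2 * (Rabs a + 1)))).
  assert (He1 : (0 < e1)%R). { unfold e1. apply Rmin_pos. lra. apply Rdiv_lt_0_compat. lra. pose proof (Rabs_pos a); lra. }
  destruct (cont_eps psi x Hc e1 He1) as [d1 [Hd1 H1]].
  destruct (Hd (eps / (2 * K))%R) as [d2 H2]. apply Rdiv_lt_0_compat; lra.
  exists (mkposreal (Rmin d1 d2) (Rmin_pos _ _ Hd1 (cond_pos d2))). simpl. intros h Hh Hl.
  assert (Hl1 : (Rabs h < d1)%R) by (apply Rlt_le_trans with (Rmin d1 d2); [exact Hl | apply Rmin_l]).
  assert (Hl2 : (Rabs h < d2)%R) by (apply Rlt_le_trans with (Rmin d1 d2); [exact Hl | apply Rmin_r]).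
  specialize (H1 (x + h)%R). replace (x + h - x)%R with h in H1 by ring. specialize (H1 Hl1).
  specialize (H2 h Hh Hl2). rewrite H0 in H2 |- *.
  replace ((phi (x + h) * psi (x + h) - 0 * psi x) / h - a * psi x)%R with
    (((phi (x + h) - 0) / h - a) * psi (x + h) + a * (psi (x + h) - psi x))%R by (field; auto).
  eapply Rle_lt_trans. apply Rabs_triang. rewrite !Rabs_mult.
  assert (B1 : (Rabs (psi (x + h)) <= K)%R).
  { unfold K. replace (psi (x+h)) with (psi x + (psi (x+h) - psi x))%R by ring.
    eapply Rle_trans. apply Rabs_triang. assert (e1 <= 1)%R by apply Rmin_l. lra. }
  assert (B2 : (Rabs a * Rabs (psi (x + h) - psi x) <= Rabs a * e1)%R).
  { apply Rmult_le_compat_l. apply Rabs_pos. lra. }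
  assert (B3 : (Rabs a * e1 <= eps / 2)%R).
  { assert (e1 <= eps / (2 * (Rabs a + 1)))%R by apply Rmin_r.
    pose proof (Rabs_pos a).
    apply Rle_trans with (Rabs a * (eps / (2 * (Rabs a + 1))))%R.
    apply Rmult_le_compat_l; auto.
    apply Rle_trans with ((Rabs a + 1) * (eps / (2 * (Rabs a + 1))))%R.
    apply Rmult_le_compat_r. apply Rlt_le, Rdiv_lt_0_compat; lra. lra.
    right. field. lra. }
  assert (B4 : Rabs ((phi (x + h) - 0) / h - a) * Rabs (psi (x + h)) < eps / 2).
  { apply Rle_lt_trans with (Rabs ((phi (x + h) - 0) / h - a) * K).
    apply Rmult_le_compat_l; auto using Rabs_pos.
    replace (eps / 2) with (eps / (2 * K) * K) by (field; lra). apply Rmult_lt_compat_r; auto. }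
  lra. Qed.

Open Scope C_scope.
Lemma dC_mult_zero (phi psi : R -> C) x a : phi x = 0 -> is_deriveC phi x a -> continuousC_at psi x ->
  is_deriveC (fun t => phi t * psi t) x (a * psi x).
Proof. intros H0 [A B] [C D].
  assert (H1 : Re (phi x) = 0%R) by (rewrite H0; reflexivity).
  assert (H2 : Im (phi x) = 0%R) by (rewrite H0; reflexivity).
  split; unfold Re, Im in *; simpl.
  apply (dR_minus (fun t => fst (phi t) * fst (psi t)) (fun t => snd (phi t) * snd (psi t)))%R;
    apply dR_mult_zero; auto.
  apply (dR_plus (fun t => fst (phi t) * snd (psi t)) (fun t => snd (phi t) * fst (psi t)))%R;
    apply dR_mult_zero; auto. Qed.


Open Scope C_scope.
Open Scope C_scope.

Lemma cprod_split n j b : (1 <= j <= n)%nat ->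
  cprod n (fun k => b (S k)) = b j * cprod_ne n j b.
Proof. unfold cprod_ne. induction n; intros H. lia. cbn [cprod].
  destruct (Nat.eqb_spec (S n) j).
  - subst. rewrite (cprod_ext n (fun k => if Nat.eqb (S k) (S n) then 1 else b (S k)) (fun k => b (S k))).
    ring. intros. destruct (Nat.eqb_spec (S k) (S n)); auto; lia.
  - rewrite IHn by lia. ring. Qed.

Lemma cprod_nonzero m (a : nat -> C) : (forall k, (k < m)%nat -> a k <> 0) -> cprod m a <> 0.
Proof. induction m; simpl; intros H. intro E. injection E. intros. lra.
  apply Cmult_neq_0; auto. Qed.

Lemma cprod_zero m (a : nat -> C) k0 : (k0 < m)%nat -> a k0 = 0 -> cprod m a = 0.
Proof. induction m; simpl; intros H E. lia.
  destruct (Nat.eq_dec k0 m). subst. rewrite E; ring. rewrite IHm by (auto; lia). ring. Qed.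

Lemma csum_single m (a : nat -> C) k0 : (k0 < m)%nat -> (forall k, (k < m)%nat -> k <> k0 -> a k = 0) -> csum m a = a k0.
Proof. induction m; intros H E. lia. cbn [csum].
  destruct (Nat.eq_dec k0 m). subst.
  replace (csum m a) with (RtoC 0). ring.
  symmetry. transitivity (csum m (fun _ => RtoC 0)). apply csum_ext; intros; apply E; lia.
  clear. induction m; cbn [csum]. reflexivity. rewrite IHm; ring.
  rewrite IHm by (auto; lia). rewrite (E m) by lia. ring. Qed.

Lemma cprod_ne_nonzero n j (b : nat -> C) : (forall l, (1 <= l <= n)%nat -> l <> j -> b l <> 0) -> cprod_ne n j b <> 0.
Proof. intros H. unfold cprod_ne. apply cprod_nonzero. intros k Hk.
  destruct (Nat.eqb_spec (S k) j). intro E; injection E; intros; lra. apply H; lia. Qed.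

Lemma cprod_deriv_at_root n j (c : C) (r : nat -> C) : (1 <= j <= n)%nat -> c = r j ->
  csum n (fun k => 1 * cprod n (fun k' => if Nat.eqb k' k then 1 else c - r (S k')))
  = cprod_ne n j (fun l => c - r l).
Proof. intros Hj Hc. rewrite (csum_single n _ (pred j)).
  - unfold cprod_ne. rewrite Cmult_1_l. apply cprod_ext. intros k Hk.
    destruct (Nat.eqb_spec k (pred j)); destruct (Nat.eqb_spec (S k) j); auto; lia.
  - lia.
  - intros k Hk Hne. rewrite (cprod_zero n _ (pred j)). ring. lia.
    destruct (Nat.eqb_spec (pred j) k). lia. replace (S (pred j)) with j by lia. rewrite Hc; ring. Qed.

Lemma contC_cprod_ne n j (b : nat -> R -> C) x :
  (forall l, (1 <= l <= n)%nat -> continuousC_at (b l) x) ->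
  continuousC_at (fun t => cprod_ne n j (fun l => b l t)) x.
Proof. intros H. unfold cprod_ne. apply (contC_cprod n (fun k t => if Nat.eqb (S k) j then 1 else b (S k) t)).
  intros k Hk. destruct (Nat.eqb (S k) j). apply contC_const. apply H; lia. Qed.

Lemma root_deriv n (r : nat -> R -> C) j x dA :
  (1 <= j <= n)%nat ->
  (forall l, (1 <= l <= n)%nat -> continuousC_at (r l) x) ->
  (forall l, (1 <= l <= n)%nat -> l <> j -> r j x <> r l x) ->
  is_deriveC (fun t => cprod n (fun k => r j x - r (S k) t)) x dA ->
  is_deriveC (r j) x (- dA / cprod_ne n j (fun l => r j x - r l x)).
Proof. intros Hj Hc Hd HA. set (c := r j x).
  set (P := fun t => cprod_ne n j (fun l => c - r l t)).
  assert (HP : P x <> 0).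
  { apply cprod_ne_nonzero. intros l Hl Hne E. apply (Hd l Hl Hne).
    replace (r l x) with ((r l x - c) + c) by ring. fold c. rewrite <- (Copp_minus_distr c (r l x)), E. ring. }
  assert (HcP : continuousC_at P x).
  { apply (contC_cprod_ne n j (fun l t => c - r l t)). intros; apply contC_minus. apply contC_const. auto. }
  assert (Hloc := locC_nonzero P x HcP HP).
  assert (H0 : cprod n (fun k => c - r (S k) x) = 0).
  { apply (cprod_zero n _ (pred j)). lia. replace (S (pred j)) with j by lia. unfold c; ring. }
  assert (HD : is_deriveC (fun t => c - cprod n (fun k => c - r (S k) t) * / P t) x (0 - dA * / P x)).
  { apply dC_minus. apply dC_const. apply dC_mult_zero; auto. apply contC_inv; auto. }
  eapply dC_eq. eapply dC_ext_loc. 2: exact HD.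
  - eapply filter_imp. 2: exact Hloc. intros t Ht. cbv beta.
    rewrite (cprod_split n j (fun l => c - r l t)) by lia. fold (P t). assert (Ef : forall c0 v p : C, p <> 0 -> c0 - (c0 - v) * p * / p = v) by (clear; intros; field; auto). apply Ef; auto.
  - unfold Cdiv, P. ring. Qed.


Open Scope C_scope.
Open Scope C_scope.

Lemma Om_open a b : isopen (open_rbar_interval a b).
Proof. unfold isopen, open_rbar_interval.
  apply (open_and (T := R_UniformSpace) (fun x => Rbar_lt a x) (fun x => Rbar_lt x b)).
  apply open_Rbar_gt. apply open_Rbar_lt. Qed.

Definition Gc (gt : nat -> R -> C) n z x := cpolyN gt n z x.

Lemma CkC_Gcomp Om k n (gt : nat -> R -> C) (w : R -> C) :
  (forall i, smoothC (gt i)) -> CkC Om k w -> CkC Om k (fun x => cpolyN gt n (w x) x).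
Proof. intros Hg Hw. unfold cpolyN.
  apply (CkC_csum Om k n (fun i x => gt (n - 1 - i)%nat x * cpow (w x) i)).
  intros i Hi. apply CkC_mult. apply smooth_CkC. apply smoothC_on_weak; auto.
  apply CkC_cpow; auto. Qed.

Definition Phi n (gt : nat -> R -> C) (r : nat -> R -> C) j x :=
  - (2 * Ci) * (- r j x * cpolyN gt n (r j x) x) / cprod_ne n j (fun l => r j x - r l x).

Lemma CkC_Phi Om k n gt r j :
  (forall i, smoothC (gt i)) -> (1 <= j <= n)%nat ->
  (forall l x, (1 <= l <= n)%nat -> l <> j -> Om x -> r j x <> r l x) ->
  (forall l, (1 <= l <= n)%nat -> CkC Om k (r l)) -> CkC Om k (Phi n gt r j).
Proof. intros Hg Hj Hd Hr. unfold Phi.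
  apply (CkC_div Om k (fun x => - (2 * Ci) * (- r j x * cpolyN gt n (r j x) x))
           (fun x => cprod_ne n j (fun l => r j x - r l x))).
  - intros x Hx. apply cprod_ne_nonzero. intros l Hl Hne E. apply (Hd l x Hl Hne Hx).
    replace (r l x) with (r j x - (r j x - r l x)) by ring. rewrite E. ring.
  - apply CkC_mult. apply CkC_const. apply CkC_mult. apply CkC_opp; auto.
    apply CkC_Gcomp; auto.
  - unfold cprod_ne. apply (CkC_cprod Om k n (fun i x => if Nat.eqb (S i) j then 1 else r j x - r (S i) x)).
    intros i Hi. destruct (Nat.eqb (S i) j). apply CkC_const. apply CkC_minus; apply Hr; lia. Qed.


Lemma family_deriv n (r gt : nat -> R -> C) (alpha : R -> C) Om :
  (forall z x, is_deriveC (fun t => cprod n (fun k => z - r (S k) t)) x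
     (alpha x * cprod n (fun k => z - r (S k) x) - 2 * Ci * z * cpolyN gt n z x)) ->
  (forall j x, (1 <= j <= n)%nat -> Om x -> continuousC_at (r j) x) ->
  (forall j l x, (1 <= j <= n)%nat -> (1 <= l <= n)%nat -> j <> l -> Om x -> r j x <> r l x) ->
  forall j x, (1 <= j <= n)%nat -> Om x -> is_deriveC (r j) x (Phi n gt r j x).
Proof. intros HA Hc Hd j x Hj Hx.
  eapply dC_eq. apply (root_deriv n r j x).
  exact Hj. intros; apply Hc; auto. intros l Hl Hne; apply Hd; auto. apply HA.
  unfold Phi. rewrite (cprod_zero n (fun k => r j x - r (S k) x) (pred j)).
  unfold Cdiv. ring. lia. replace (S (pred j)) with j by lia. ring. Qed.

Lemma family_smooth n (r gt : nat -> R -> C) Om :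
  (forall i, smoothC (gt i)) ->
  (forall j x, (1 <= j <= n)%nat -> Om x -> is_deriveC (r j) x (Phi n gt r j x)) ->
  (forall j l x, (1 <= j <= n)%nat -> (1 <= l <= n)%nat -> j <> l -> Om x -> r j x <> r l x) ->
  forall k j, (1 <= j <= n)%nat -> CkC Om k (r j).
Proof. intros Hg HD Hd k. induction k; intros j Hj.
  split; simpl; auto.
  apply (CkC_S Om k (r j) (Phi n gt r j)). intros; apply HD; auto.
  apply CkC_Phi; auto. Qed.

Lemma smooth_deriv (g : R -> C) x : smoothC g -> is_deriveC g x (DeriveC g x).
Proof. intros [A B]. split; unfold DeriveC, Re, Im; simpl.
  apply Derive_correct. apply (A 1%nat x I).
  apply Derive_correct. apply (B 1%nat x I). Qed.

Lemma dC_poly_comp n (c : nat -> R -> C) (w : R -> C) x w' :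
  (forall i, smoothC (c i)) -> is_deriveC w x w' ->
  is_deriveC (fun t => cpolyN c n (w t) t) x
    (csum n (fun i => DeriveC (c (n - 1 - i)%nat) x * cpow (w x) i)
     + csum n (fun i => c (n - 1 - i)%nat x * (RtoC (INR i) * cpow (w x) (pred i))) * w').
Proof. intros Hc Hw. unfold cpolyN. eapply dC_eq.
  apply (dC_csum n (fun i t => c (n - 1 - i)%nat t * cpow (w t) i)).
  intros i Hi. apply dC_mult. apply smooth_deriv; auto. apply dC_cpow; eauto.
  rewrite <- csum_mult_r, <- csum_plus. apply csum_ext. intros; cbv beta; ring. Qed.

Lemma dC_poly_x n (c : nat -> R -> C) (z : C) x :
  (forall i, smoothC (c i)) ->
  is_deriveC (fun t => cpolyN c n z t) x
    (csum n (fun i => DeriveC (c (n - 1 - i)%nat) x * cpow z i)).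
Proof. intros Hc. eapply dC_eq. apply (dC_poly_comp n c (fun _ => z) x 0); auto. apply dC_const.
  cbv beta. ring. Qed.

Lemma dC_poly_z n (c : nat -> R -> C) (z : C) x :
  is_deriveC (fun s => cpolyN c n (z + RtoC s) x) 0%R
    (csum n (fun i => c (n - 1 - i)%nat x * (RtoC (INR i) * cpow z (pred i)))).
Proof. unfold cpolyN. eapply dC_eq.
  apply (dC_csum n (fun i s => c (n - 1 - i)%nat x * cpow (z + RtoC s) i)).
  intros i Hi. apply dC_mult. apply dC_const. apply (dC_cpow _ 1).
  eapply dC_eq. apply dC_plus. apply dC_const. apply dC_RtoC. ring.
  apply csum_ext. intros. replace (z + RtoC 0) with z by ring. ring. Qed.

Lemma dC_cprod_z m (c : C) (e : nat -> C) :
  is_deriveC (fun s => cprod m (fun k => (c + RtoC s) - e k)) 0%R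
    (csum m (fun k => 1 * cprod m (fun k' => if Nat.eqb k' k then 1 else c - e k'))).
Proof. eapply dC_eq.
  apply (dC_cprod m (fun k s => (c + RtoC s) - e k) (fun _ => 1)).
  intros k Hk. eapply dC_eq. apply dC_minus. apply dC_plus. apply dC_const. apply dC_RtoC. apply dC_const. ring.
  apply csum_ext. intros k Hk. f_equal. apply cprod_ext. intros k' Hk'.
  destruct (Nat.eqb k' k); auto. ring. Qed.

Lemma family_yderiv n E (r gt fb : nat -> R -> C) j x :
  (forall i, smoothC (gt i)) ->
  (forall z x, is_deriveC (fun t => cpolyN gt n z t) x
     (Ci * (cpolyN fb (S n) z x - cprod n (fun k => z - r (S k) x)))) ->
  (forall z x, z * z * cpolyN gt n z x * cpolyN gt n z x
     + z * cprod n (fun k => z - r (S k) x) * cpolyN fb (S n) z x = Rpoly n E z) ->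
  (1 <= j <= n)%nat ->
  (forall l, (1 <= l <= n)%nat -> l <> j -> r j x <> r l x) ->
  is_deriveC (r j) x (Phi n gt r j x) ->
  is_deriveC (fun t => - r j t * cpolyN gt n (r j t) t) x
    (- Ci * dRpoly n E (r j x) / cprod_ne n j (fun l => r j x - r l x)).
Proof. intros Hg HG HR Hj Hd HD.
  set (c := r j x). set (w' := Phi n gt r j x).
  set (P := cprod_ne n j (fun l => c - r l x)).
  assert (HP : P <> 0).
  { apply cprod_ne_nonzero. intros l Hl Hne E0. apply (Hd l Hl Hne).
    replace (r l x) with (c - (c - r l x)) by ring. rewrite E0. unfold c; ring. }
  set (Gx := csum n (fun i => DeriveC (gt (n - 1 - i)%nat) x * cpow c i)).
  set (Gz := csum n (fun i => gt (n - 1 - i)%nat x * (RtoC (INR i) * cpow c (pred i)))).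
  set (G0 := cpolyN gt n c x). set (B0 := cpolyN fb (S n) c x).
  assert (HA0 : cprod n (fun k => c - r (S k) x) = 0).
  { apply (cprod_zero n _ (pred j)). lia. replace (S (pred j)) with j by lia. unfold c; ring. }
  assert (HGx : Gx = Ci * B0).
  { assert (U := dC_unique _ _ _ _ (dC_poly_x n gt c x Hg) (HG c x)).
    fold Gx in U. rewrite U, HA0. fold B0. ring. }
  (* z-derivative of the identity *)
  assert (HL : is_deriveC (fun s => Rpoly n E (c + RtoC s)) 0%R (dRpoly n E c)).
  { unfold Rpoly, dRpoly. eapply dC_eq. apply (dC_cprod_z (2 * n + 1) c E).
    apply csum_ext; intros; ring. }
  assert (HW : is_deriveC (fun s => c + RtoC s) 0%R 1).
  { eapply dC_eq. apply dC_plus. apply dC_const. apply dC_RtoC. ring. }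
  assert (HGz := dC_poly_z n gt c x). fold Gz in HGz.
  assert (HBz := dC_poly_z (S n) fb c x).
  assert (HAz := dC_cprod_z n c (fun k => r (S k) x)).
  cbv beta in HAz. rewrite (cprod_deriv_at_root n j c (fun l => r l x)) in HAz by (auto; reflexivity).
  fold P in HAz.
  assert (HV := dC_plus _ _ _ _ _
     (dC_mult _ _ _ _ _ (dC_mult _ _ _ _ _ (dC_mult _ _ _ _ _ HW HW) HGz) HGz)
     (dC_mult _ _ _ _ _ (dC_mult _ _ _ _ _ HW HAz) HBz)).
  assert (HL2 : is_deriveC (fun s => (c + RtoC s) * (c + RtoC s) * cpolyN gt n (c + RtoC s) x
       * cpolyN gt n (c + RtoC s) x + (c + RtoC s) * cprod n (fun k => (c + RtoC s) - r (S k) x)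
       * cpolyN fb (S n) (c + RtoC s) x) 0%R (dRpoly n E c)).
  { eapply dC_ext. 2: exact HL. intros s. symmetry. apply HR. }
  assert (U := dC_unique _ _ _ _ HV HL2). cbv beta in U.
  replace (c + RtoC 0) with c in U by ring. fold G0 B0 in U. rewrite HA0 in U.
  assert (HY := dC_mult _ _ _ _ _ (dC_opp _ _ _ HD) (dC_poly_comp n gt (r j) x _ Hg HD)).
  eapply dC_eq. exact HY. cbv beta. fold c. fold w'. fold Gx Gz G0. fold P.
  rewrite <- U, HGx. unfold w', Phi. fold c. fold G0. fold P.
  field. auto. Qed.


Open Scope C_scope.
Open Scope R_scope.

Fixpoint rsum (m : nat) (f : nat -> R) : R := match m with O => 0 | S k => rsum k f + f k end.

Lemma rsum_ext m f g : (forall k, (k < m)%nat -> f k = g k) -> rsum m f = rsum m g.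
Proof. induction m; simpl; intros; auto. rewrite IHm, H; auto. Qed.
Lemma rsum_le m f g : (forall k, (k < m)%nat -> f k <= g k) -> rsum m f <= rsum m g.
Proof. induction m; simpl; intros. lra. pose proof (IHm (fun k Hk => H k ltac:(lia))). pose proof (H m ltac:(lia)). lra. Qed.
Lemma rsum_nonneg m f : (forall k, (k < m)%nat -> 0 <= f k) -> 0 <= rsum m f.
Proof. intros. replace 0 with (rsum m (fun _ => 0)). apply rsum_le; auto.
  clear; induction m; simpl; auto; rewrite IHm; ring. Qed.
Lemma rsum_term_le m f k0 : (forall k, (k < m)%nat -> 0 <= f k) -> (k0 < m)%nat -> f k0 <= rsum m f.
Proof. induction m; simpl; intros. lia. destruct (Nat.eq_dec k0 m). subst.
  pose proof (rsum_nonneg m f (fun k Hk => H k ltac:(lia))). lra.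
  pose proof (IHm (fun k Hk => H k ltac:(lia)) ltac:(lia)). pose proof (H m ltac:(lia)). lra. Qed.
Lemma rsum_bound m f c : (forall k, (k < m)%nat -> f k <= c) -> rsum m f <= INR m * c.
Proof. induction m; cbn [rsum]; intros. simpl; lra. rewrite S_INR.
  pose proof (IHm (fun k Hk => H k ltac:(lia))). pose proof (H m ltac:(lia)). lra. Qed.
Lemma rsum_abs m f : Rabs (rsum m f) <= rsum m (fun k => Rabs (f k)).
Proof. induction m; simpl. rewrite Rabs_R0; lra.
  eapply Rle_trans. apply Rabs_triang. lra. Qed.
Lemma rsum_plus m f g : rsum m (fun k => f k + g k) = rsum m f + rsum m g.
Proof. induction m; simpl. ring. rewrite IHm; ring. Qed.
Lemma rsum_scal m f c : rsum m (fun k => c * f k) = c * rsum m f.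
Proof. induction m; simpl. ring. rewrite IHm; ring. Qed.

Lemma rsum_CS_aux m w a : 2 * a * rsum m w <= INR m * a ^ 2 + rsum m (fun k => w k ^ 2).
Proof. induction m; cbn [rsum]. simpl; lra. rewrite S_INR. pose proof (IHm). pose proof (pow2_ge_0 (a - w m)). nra. Qed.
Lemma rsum_CS m w : (rsum m w) ^ 2 <= INR m * rsum m (fun k => w k ^ 2).
Proof. induction m; cbn [rsum]. simpl; lra. rewrite S_INR. pose proof (rsum_CS_aux m w (w m)).
  pose proof (rsum_nonneg m (fun k => w k ^ 2) (fun k _ => pow2_ge_0 (w k))). simpl in *. nra. Qed.

Lemma dR_rsum m (f : nat -> R -> R) df t :
  (forall k, (k < m)%nat -> is_derive (f k) t (df k)) ->
  is_derive (fun s => rsum m (fun k => f k s)) t (rsum m df).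
Proof. induction m; simpl; intros. apply dR_const. apply dR_plus; auto. Qed.

Lemma cont_rsum m (f : nat -> R -> R) t :
  (forall k, (k < m)%nat -> continuity_pt (f k) t) -> continuity_pt (fun s => rsum m (fun k => f k s)) t.
Proof. induction m; simpl; intros. apply continuity_pt_const; intros ? ?; auto.
  apply contR_plus; auto. Qed.

Lemma cont_Cmod (g : R -> C) t : continuousC_at g t -> continuity_pt (fun s => Cmod (g s)) t.
Proof. intros [A B]. unfold Cmod.
  apply (continuity_pt_comp (fun s => fst (g s) ^ 2 + snd (g s) ^ 2) sqrt).
  simpl. apply contR_plus; apply contR_mult; auto; apply contR_mult; auto;
    apply continuity_pt_const; intros ? ?; auto.
  apply continuity_pt_sqrt. pose proof (pow2_ge_0 (fst (g t))). pose proof (pow2_ge_0 (snd (g t))). lra. Qed.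

Open Scope C_scope.
Lemma Cmod_cprod_le m (a : nat -> C) B : (forall k, (k < m)%nat -> (Cmod (a k) <= B)%R) -> (0 <= B)%R ->
  (Cmod (cprod m a) <= B ^ m)%R.
Proof. induction m; simpl; intros H HB. rewrite Cmod_1; lra.
  rewrite Cmod_mult. rewrite Rmult_comm. apply Rmult_le_compat; auto using Cmod_ge_0.
  all: try (apply H; lia); try (apply IHm; auto). Qed.

Lemma Cmod_cprod_diff m (a b : nat -> C) B :
  (forall k, (k < m)%nat -> (Cmod (a k) <= B)%R /\ (Cmod (b k) <= B)%R) -> (1 <= B)%R ->
  (Cmod (cprod m a - cprod m b) <= B ^ m * rsum m (fun k => Cmod (a k - b k)))%R.
Proof. induction m; simpl; intros H HB. replace (1 - 1) with (RtoC 0) by ring. rewrite Cmod_0; lra.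
  replace (cprod m a * a m - cprod m b * b m) with ((cprod m a - cprod m b) * a m + cprod m b * (a m - b m)) by ring.
  eapply Rle_trans. apply Cmod_triangle. rewrite !Cmod_mult.
  assert (H1 := IHm (fun k Hk => H k ltac:(lia)) HB).
  assert (H2 : (Cmod (cprod m b) <= B ^ m)%R).
  { apply Cmod_cprod_le. intros; apply H; lia. lra. }
  destruct (H m ltac:(lia)) as [Ha Hb].
  assert (HBm : (1 <= B ^ m)%R) by (apply pow_R1_Rle; lra).
  assert (Hr : (0 <= rsum m (fun k => Cmod (a k - b k)))%R) by (apply rsum_nonneg; intros; apply Cmod_ge_0).
  pose proof (Cmod_ge_0 (a m - b m)). pose proof (Cmod_ge_0 (cprod m a - cprod m b)). pose proof (Cmod_ge_0 (a m)).
  pose proof (Cmod_ge_0 (cprod m b)).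
  apply Rle_trans with (B ^ m * rsum m (fun k => Cmod (a k - b k)) * B + B ^ m * Cmod (a m - b m))%R.
  apply Rplus_le_compat. apply Rmult_le_compat; auto. apply Rmult_le_compat_r; auto.
  assert (B ^ m * Cmod (a m - b m) <= B ^ m * B * Cmod (a m - b m))%R.
  { rewrite <- (Rmult_1_r (B ^ m)) at 1. apply Rmult_le_compat_r; auto. apply Rmult_le_compat_l; lra. }
  nra. Qed.

Lemma Cmod_csum_diff m (a b : nat -> C) :
  (Cmod (csum m a - csum m b) <= rsum m (fun k => Cmod (a k - b k)))%R.
Proof. induction m; simpl. replace (0 - 0) with (RtoC 0) by ring. rewrite Cmod_0; lra.
  replace (csum m a + a m - (csum m b + b m)) with ((csum m a - csum m b) + (a m - b m)) by ring.
  eapply Rle_trans. apply Cmod_triangle. lra. Qed.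

Open Scope R_scope.
Lemma is_derive_cont (f : R -> R) t l : is_derive f t l -> continuity_pt f t.
Proof. intros H. apply continuity_pt_filterlim. apply (@ex_derive_continuous R_AbsRing R_NormedModule). eexists; eauto. Qed.

Lemma gronwall (Dd dD : R -> R) K x0 x1 :
  (forall t, Rmin x0 x1 <= t <= Rmax x0 x1 -> is_derive Dd t (dD t)) ->
  (forall t, Rmin x0 x1 <= t <= Rmax x0 x1 -> Rabs (dD t) <= K * Dd t) ->
  (forall t, Rmin x0 x1 <= t <= Rmax x0 x1 -> 0 <= Dd t) ->
  Dd x0 = 0 -> Dd x1 = 0.
Proof. intros Hd Hb Hp H0.
  destruct (Req_dec x0 x1) as [E|Hne]. subst; auto.
  set (s := if Rlt_dec x0 x1 then 1 else -1).
  assert (Hs : s * (x1 - x0) = Rabs (x1 - x0)).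
  { unfold s; destruct (Rlt_dec x0 x1). rewrite Rabs_right; lra. rewrite Rabs_left; lra. }
  assert (Hexp : forall t, is_derive (fun t => exp (-(K * s * (t - x0)))) t (exp (-(K * s * (t - x0))) * (-(K * s)))).
  { intros t. auto_derive. auto. unfold Rminus. ring. }
  set (e := fun t => Dd t * exp (-(K * s * (t - x0)))).
  set (de := fun t => dD t * exp (-(K * s * (t - x0))) + Dd t * (exp (-(K * s * (t - x0))) * (-(K * s)))).
  assert (He : forall t, Rmin x0 x1 <= t <= Rmax x0 x1 -> is_derive e t (de t)).
  { intros t Ht. unfold e, de. apply (dR_mult Dd (fun t => exp (-(K * s * (t - x0))))). apply Hd; auto. apply Hexp. }
  destruct (MVT_gen e x0 x1 de) as [c [Hc Hm]].
  { intros; apply He; lra. }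
  { intros; eapply is_derive_cont; apply He; auto. }
  unfold e in Hm. rewrite H0 in Hm. unfold de in Hm.
  replace (x0 - x0) with 0 in Hm by ring.
  assert (Hx1 := Hp x1 ltac:(split; [apply Rmin_r | apply Rmax_r])).
  assert (Hc1 := Hp c Hc). assert (Hc2 := Hb c Hc).
  pose proof (exp_pos (-(K * s * (x1 - x0)))). pose proof (exp_pos (-(K * s * (c - x0)))).
  set (E1 := exp (-(K * s * (c - x0)))) in *. clearbody E1 s.
  assert (Hneg : (dD c * E1 + Dd c * (E1 * - (K * s))) * (x1 - x0) <= 0).
  { replace ((dD c * E1 + Dd c * (E1 * - (K * s))) * (x1 - x0)) with
      (E1 * (dD c * (x1 - x0) - K * Dd c * (s * (x1 - x0)))) by ring.
    rewrite Hs. assert (dD c * (x1 - x0) <= Rabs (dD c) * Rabs (x1 - x0)).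
    { rewrite <- Rabs_mult. apply Rle_abs. }
    assert (Rabs (dD c) * Rabs (x1 - x0) <= K * Dd c * Rabs (x1 - x0)).
    { apply Rmult_le_compat_r. apply Rabs_pos. auto. }
    assert (dD c * (x1 - x0) - K * Dd c * Rabs (x1 - x0) <= 0) by lra.
    nra. }
  rewrite <- Hm in Hneg. rewrite Rmult_0_l, Rminus_0_r in Hneg. nra. Qed.


Open Scope C_scope.
Open Scope R_scope.

Lemma Cmod_minus_le (a b : C) : Cmod (a - b) <= Cmod a + Cmod b.
Proof. unfold Cminus. eapply Rle_trans. apply Cmod_triangle. rewrite Cmod_opp; lra. Qed.

Definition Sdiff n (zp zq yp yq : nat -> C) :=
  rsum n (fun k => Cmod (zp (S k) - zq (S k))%C + Cmod (yp (S k) - yq (S k))%C).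

Lemma Sdiff_z n zp zq yp yq l : (1 <= l <= n)%nat -> Cmod (zp l - zq l)%C <= Sdiff n zp zq yp yq.
Proof. intros Hl. unfold Sdiff.
  eapply Rle_trans. 2: apply (rsum_term_le n _ (pred l)).
  cbv beta. replace (S (pred l)) with l by lia. pose proof (Cmod_ge_0 (yp l - yq l)%C). lra.
  intros; pose proof (Cmod_ge_0 (zp (S k) - zq (S k))%C); pose proof (Cmod_ge_0 (yp (S k) - yq (S k))%C); lra.
  lia. Qed.
Lemma Sdiff_y n zp zq yp yq l : (1 <= l <= n)%nat -> Cmod (yp l - yq l)%C <= Sdiff n zp zq yp yq.
Proof. intros Hl. unfold Sdiff.
  eapply Rle_trans. 2: apply (rsum_term_le n _ (pred l)).
  cbv beta. replace (S (pred l)) with l by lia. pose proof (Cmod_ge_0 (zp l - zq l)%C). lra.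
  intros; pose proof (Cmod_ge_0 (zp (S k) - zq (S k))%C); pose proof (Cmod_ge_0 (yp (S k) - yq (S k))%C); lra.
  lia. Qed.
Lemma Sdiff_nonneg n zp zq yp yq : 0 <= Sdiff n zp zq yp yq.
Proof. apply rsum_nonneg. intros; pose proof (Cmod_ge_0 (zp (S k) - zq (S k))%C); pose proof (Cmod_ge_0 (yp (S k) - yq (S k))%C); lra. Qed.

Lemma denom_diff n j (zp zq yp yq : nat -> C) M : (1 <= j <= n)%nat -> 0 <= M ->
  (forall l, (1 <= l <= n)%nat -> Cmod (zp l) <= M /\ Cmod (zq l) <= M) ->
  Cmod (cprod_ne n j (fun l => zp j - zp l) - cprod_ne n j (fun l => zq j - zq l))%C
   <= (2 * M + 1) ^ n * (INR n * (2 * Sdiff n zp zq yp yq)).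
Proof. intros Hj HM Hb. unfold cprod_ne.
  eapply Rle_trans. apply (Cmod_cprod_diff n _ _ (2 * M + 1)).
  - intros k Hk. destruct (Nat.eqb (S k) j). rewrite Cmod_1; split; lra.
    destruct (Hb j Hj) as [A1 A2]. destruct (Hb (S k) ltac:(lia)) as [B1 B2].
    pose proof (Cmod_minus_le (zp j) (zp (S k))). pose proof (Cmod_minus_le (zq j) (zq (S k))). split; lra.
  - lra.
  - apply Rmult_le_compat_l. apply pow_le; lra.
    apply rsum_bound. intros k Hk. destruct (Nat.eqb (S k) j).
    replace (1 - 1)%C with (RtoC 0) by ring. rewrite Cmod_0. pose proof (Sdiff_nonneg n zp zq yp yq). lra.
    replace (zp j - zp (S k) - (zq j - zq (S k)))%C with ((zp j - zq j) - (zp (S k) - zq (S k)))%C by ring.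
    eapply Rle_trans. apply Cmod_minus_le.
    pose proof (Sdiff_z n zp zq yp yq j Hj). pose proof (Sdiff_z n zp zq yp yq (S k) ltac:(lia)). lra. Qed.

Definition sumE n (E : nat -> C) := rsum (2 * n + 1) (fun k => Cmod (E k)).

Lemma dR_diff n E j (zp zq yp yq : nat -> C) M : (1 <= j <= n)%nat -> 0 <= M ->
  Cmod (zp j) <= M -> Cmod (zq j) <= M ->
  Cmod (dRpoly n E (zp j) - dRpoly n E (zq j))%C
   <= INR (2 * n + 1) * ((M + 1 + sumE n E) ^ (2 * n + 1) * (INR (2 * n + 1) * Sdiff n zp zq yp yq)).
Proof. intros Hj HM H1 H2. unfold dRpoly.
  eapply Rle_trans. apply Cmod_csum_diff. apply rsum_bound. intros m Hm.
  assert (HE : forall k, (k < 2 * n + 1)%nat -> Cmod (E k) <= sumE n E).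
  { intros. unfold sumE. apply (rsum_term_le (2 * n + 1) (fun k => Cmod (E k))); auto. intros; apply Cmod_ge_0. }
  assert (HsE : 0 <= sumE n E) by (apply rsum_nonneg; intros; apply Cmod_ge_0).
  eapply Rle_trans. apply (Cmod_cprod_diff (2 * n + 1) _ _ (M + 1 + sumE n E)).
  - intros k Hk. destruct (Nat.eqb k m). rewrite Cmod_1; split; lra.
    pose proof (Cmod_minus_le (zp j) (E k)). pose proof (Cmod_minus_le (zq j) (E k)). pose proof (HE k Hk). split; lra.
  - lra.
  - apply Rmult_le_compat_l. apply pow_le; lra.
    apply rsum_bound. intros k Hk. destruct (Nat.eqb k m).
    replace (1 - 1)%C with (RtoC 0) by ring. rewrite Cmod_0. pose proof (Sdiff_nonneg n zp zq yp yq). lra.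
    replace (zp j - E k - (zq j - E k))%C with (zp j - zq j)%C by ring.
    apply Sdiff_z; auto. Qed.

Definition C1c n M := (2 * M + 1) ^ n * (INR n * 2).
Definition C2c n E M := INR (2 * n + 1) * ((M + 1 + sumE n E) ^ (2 * n + 1) * INR (2 * n + 1)).
Definition Lc n E M := 2 * (M + M ^ 3 * C1c n M) + (C2c n E M * M + M ^ 3 * C1c n M).

Lemma mul_le4 a b c d A B C D : 0 <= a <= A -> 0 <= b <= B -> 0 <= c <= C -> 0 <= d <= D -> a * b * c * d <= A * B * C * D.
Proof. intros. repeat apply Rmult_le_compat; try apply Rmult_le_pos; try apply Rmult_le_pos; lra. Qed.

Lemma lip_point n E j (zp zq yp yq : nat -> C) M :
  (1 <= j <= n)%nat -> 1 <= M ->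
  (forall l, (1 <= l <= n)%nat -> Cmod (zp l) <= M /\ Cmod (zq l) <= M) ->
  Cmod (yq j) <= M ->
  Cmod (/ cprod_ne n j (fun l => zp j - zp l))%C <= M ->
  Cmod (/ cprod_ne n j (fun l => zq j - zq l))%C <= M ->
  Cmod (dRpoly n E (zq j)) <= M ->
  cprod_ne n j (fun l => zp j - zp l)%C <> 0%C ->
  cprod_ne n j (fun l => zq j - zq l)%C <> 0%C ->
  Cmod (- (2 * Ci) * yp j / cprod_ne n j (fun l => zp j - zp l)
        - - (2 * Ci) * yq j / cprod_ne n j (fun l => zq j - zq l))%C <= Lc n E M * Sdiff n zp zq yp yq /\
  Cmod (- Ci * dRpoly n E (zp j) / cprod_ne n j (fun l => zp j - zp l)
        - - Ci * dRpoly n E (zq j) / cprod_ne n j (fun l => zq j - zq l))%C <= Lc n E M * Sdiff n zp zq yp yq.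
Proof. intros Hj HM Hz Hyq HPp HPq HdR Pp0 Pq0.
  set (Pp := cprod_ne n j (fun l => zp j - zp l)%C) in *.
  set (Pq := cprod_ne n j (fun l => zq j - zq l)%C) in *.
  set (S := Sdiff n zp zq yp yq).
  assert (HS : 0 <= S) by apply Sdiff_nonneg.
  assert (HdP : Cmod (Pq - Pp)%C <= C1c n M * S).
  { replace (Pq - Pp)%C with (- (Pp - Pq))%C by ring. rewrite Cmod_opp.
    eapply Rle_trans. apply (denom_diff n j zp zq yp yq M); auto; lra.
    unfold C1c, S. right; ring. }
  assert (HC1 : 0 <= C1c n M). { unfold C1c. apply Rmult_le_pos. apply pow_le; lra. apply Rmult_le_pos. apply pos_INR. lra. }
  assert (HC2 : 0 <= C2c n E M).
  { unfold C2c. apply Rmult_le_pos. apply pos_INR. apply Rmult_le_pos. apply pow_le.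
    pose proof (rsum_nonneg (2 * n + 1) (fun k => Cmod (E k)) (fun k _ => Cmod_ge_0 (E k))). unfold sumE; lra.
    apply pos_INR. }
  assert (HdR2 : Cmod (dRpoly n E (zp j) - dRpoly n E (zq j))%C <= C2c n E M * S).
  { destruct (Hz j Hj). eapply Rle_trans. apply (dR_diff n E j zp zq yp yq M); auto; lra.
    unfold C2c, S. right; ring. }
  assert (Hyd : Cmod (yp j - yq j)%C <= S) by (apply Sdiff_y; auto).
  assert (T2 : Cmod (yq j * / Pp * / Pq * (Pq - Pp))%C <= M * M * M * (C1c n M * S)).
  { rewrite !Cmod_mult. apply mul_le4; repeat split; auto using Cmod_ge_0; lra. }
  assert (T2' : Cmod (dRpoly n E (zq j) * / Pp * / Pq * (Pq - Pp))%C <= M * M * M * (C1c n M * S)).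
  { rewrite !Cmod_mult. apply mul_le4; repeat split; auto using Cmod_ge_0; lra. }
  assert (T1 : Cmod ((yp j - yq j) * / Pp)%C <= S * M).
  { rewrite Cmod_mult. apply Rmult_le_compat; auto using Cmod_ge_0. }
  assert (T1' : Cmod ((dRpoly n E (zp j) - dRpoly n E (zq j)) * / Pp)%C <= C2c n E M * S * M).
  { rewrite Cmod_mult. apply Rmult_le_compat; auto using Cmod_ge_0. }
  assert (HM3 : M ^ 3 = M * M * M) by ring.
  split.
  - replace (- (2 * Ci) * yp j / Pp - - (2 * Ci) * yq j / Pq)%C with
      (- (2 * Ci) * ((yp j - yq j) * / Pp + yq j * / Pp * / Pq * (Pq - Pp)))%C by (field; auto).
    rewrite Cmod_mult, Cmod_opp, Cmod_mult, Cmod_Ci, Cmod_R, Rabs_right by lra.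
    eapply Rle_trans. apply Rmult_le_compat_l. lra. apply Cmod_triangle.
    unfold Lc. rewrite HM3.
    assert (0 <= (C2c n E M * M + M * M * M * C1c n M) * S).
    { apply Rmult_le_pos; auto. apply Rplus_le_le_0_compat. apply Rmult_le_pos; lra.
      apply Rmult_le_pos; auto. repeat apply Rmult_le_pos; lra. }
    nra.
  - replace (- Ci * dRpoly n E (zp j) / Pp - - Ci * dRpoly n E (zq j) / Pq)%C with
      (- Ci * ((dRpoly n E (zp j) - dRpoly n E (zq j)) * / Pp + dRpoly n E (zq j) * / Pp * / Pq * (Pq - Pp)))%C by (field; auto).
    rewrite Cmod_mult, Cmod_opp, Cmod_Ci, Rmult_1_l.
    eapply Rle_trans. apply Cmod_triangle.
    unfold Lc. rewrite HM3.
    assert (0 <= (M + M * M * M * C1c n M) * S).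
    { apply Rmult_le_pos; auto. apply Rplus_le_le_0_compat. lra.
      apply Rmult_le_pos; auto. repeat apply Rmult_le_pos; lra. }
    nra. Qed.


Open Scope C_scope.
Open Scope R_scope.

Definition nsq (z : C) := Re z * Re z + Im z * Im z.
Definition dotp (a b : C) := Re a * Re b + Im a * Im b.

Lemma nsq_Cmod z : nsq z = Cmod z ^ 2.
Proof. rewrite Cmod2_alt. unfold nsq. ring. Qed.
Lemma nsq_nonneg z : 0 <= nsq z.
Proof. unfold nsq. nra. Qed.
Lemma dotp_bound a b : Rabs (dotp a b) <= Cmod a * Cmod b.
Proof. replace (dotp a b) with (Re (Cconj a * b)%C).
  eapply Rle_trans. apply re_le_Cmod. rewrite Cmod_mult, Cmod_conj. lra.
  unfold dotp, Cconj, Re, Im; simpl. ring. Qed.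
Lemma d_nsq (g : R -> C) t l : is_deriveC g t l -> is_derive (fun s => nsq (g s)) t (2 * dotp (g t) l).
Proof. intros [A B]. unfold nsq, dotp. eapply dR_eq.
  apply (dR_plus (fun s => Re (g s) * Re (g s)) (fun s => Im (g s) * Im (g s))); apply dR_mult; eassumption.
  simpl; ring. Qed.

Lemma Om_conv a b x0 x1 t : open_rbar_interval a b x0 -> open_rbar_interval a b x1 ->
  Rmin x0 x1 <= t <= Rmax x0 x1 -> open_rbar_interval a b t.
Proof. intros [A1 B1] [A2 B2] [H1 H2]. split.
  - apply Rbar_lt_le_trans with (Rmin x0 x1). apply (Rmin_case x0 x1 (fun u => Rbar_lt a u)); auto. simpl; auto.
  - apply Rbar_le_lt_trans with (Rmax x0 x1). simpl; auto. apply (Rmax_case x0 x1 (fun u => Rbar_lt u b)); auto. Qed.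

Lemma dub_cont n E Om p l t : dubrovin_solution n E Om p -> (1 <= l <= n)%nat -> Om t ->
  continuousC_at (fun s => fst (p l s)) t /\ continuousC_at (fun s => snd (p l s)) t /\
  continuousC_at (fun s => / dub_denom n (fun i => p i s) l)%C t /\
  continuousC_at (fun s => dRpoly n E (fst (p l s))) t /\
  dub_denom n (fun i => p i t) l <> 0%C.
Proof. intros Sp Hl Ht.
  assert (Hc : forall m, (1 <= m <= n)%nat -> continuousC_at (fun s => fst (p m s)) t /\ continuousC_at (fun s => snd (p m s)) t).
  { intros m Hm. destruct (Sp m Hm) as [_ [_ H]]. destruct (H t Ht) as [_ [_ [D1 D2]]].
    split; eapply dC_cont; eauto. }
  assert (Hnz : dub_denom n (fun i => p i t) l <> 0%C).
  { unfold dub_denom. apply cprod_ne_nonzero. intros m Hm Hne E0.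
    destruct (Sp l Hl) as [_ [_ H]]. destruct (H t Ht) as [_ [Hd _]]. apply (Hd m Hm Hne).
    replace (fst (p m t)) with (fst (p l t) - (fst (p l t) - fst (p m t)))%C by ring. rewrite E0. ring. }
  split. apply Hc; auto. split. apply Hc; auto. split.
  - apply contC_inv; auto. unfold dub_denom.
    apply (contC_cprod_ne n l (fun m s => fst (p l s) - fst (p m s))%C).
    intros; apply contC_minus; apply Hc; auto.
  - split; auto. unfold dRpoly. apply (contC_csum _ (fun m s => cprod (2 * n + 1) (fun k => if Nat.eqb k m then 1 else fst (p l s) - E k))%C).
    intros m Hm. apply (contC_cprod _ (fun k s => if Nat.eqb k m then 1 else fst (p l s) - E k)%C).
    intros k Hk. destruct (Nat.eqb k m). apply contC_const. apply contC_minus. apply Hc; auto. apply contC_const. Qed.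

Definition Fz n (p : nat -> R -> C * C) l t := (- (2 * Ci) * snd (p l t) / dub_denom n (fun k => p k t) l)%C.
Definition Fy n E (p : nat -> R -> C * C) l t := (- Ci * dRpoly n E (fst (p l t)) / dub_denom n (fun k => p k t) l)%C.

Lemma Lc_nonneg n E M : 0 <= M -> 0 <= Lc n E M.
Proof. intros HM.
  assert (HC1 : 0 <= C1c n M). { unfold C1c. apply Rmult_le_pos. apply pow_le; lra. apply Rmult_le_pos. apply pos_INR. lra. }
  assert (HC2 : 0 <= C2c n E M).
  { unfold C2c. apply Rmult_le_pos. apply pos_INR. apply Rmult_le_pos. apply pow_le.
    pose proof (rsum_nonneg (2 * n + 1) (fun k => Cmod (E k)) (fun k _ => Cmod_ge_0 (E k))). unfold sumE; lra.
    apply pos_INR. }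
  unfold Lc. assert (0 <= M ^ 3) by (apply pow_le; lra).
  assert (0 <= M ^ 3 * C1c n M) by (apply Rmult_le_pos; auto).
  assert (0 <= C2c n E M * M) by (apply Rmult_le_pos; auto). lra. Qed.

Lemma nsq_zero z : nsq z <= 0 -> z = 0%C.
Proof. unfold nsq. intros. apply C_eq; simpl; nra. Qed.
Lemma Csub_zero (a b : C) : (a - b)%C = 0%C -> a = b.
Proof. intros H. replace a with ((a - b) + b)%C by ring. rewrite H. ring. Qed.

Lemma dub_unique n E a b p q x0 :
  open_rbar_interval a b x0 ->
  dubrovin_solution n E (open_rbar_interval a b) p ->
  dubrovin_solution n E (open_rbar_interval a b) q ->
  (forall j, (1 <= j <= n)%nat -> p j x0 = q j x0) ->
  forall j x, (1 <= j <= n)%nat -> open_rbar_interval a b x -> p j x = q j x.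
Proof.
  intros Hx0 Sp Sq Heq j x1 Hj Hx1.
  assert (Hconv : forall t, Rmin x0 x1 <= t <= Rmax x0 x1 -> open_rbar_interval a b t). { intros. apply (Om_conv a b x0 x1); auto. }
  set (piece := fun k t => Cmod (snd (q (S k) t)) + Cmod (fst (p (S k) t)) + Cmod (fst (q (S k) t))
      + Cmod (/ dub_denom n (fun i => p i t) (S k))%C + Cmod (/ dub_denom n (fun i => q i t) (S k))%C
      + Cmod (dRpoly n E (fst (q (S k) t)))).
  assert (Hpn : forall k t, 0 <= piece k t).
  { intros. unfold piece. repeat apply Rplus_le_le_0_compat; apply Cmod_ge_0. }
  set (bnd := fun t => rsum n (fun k => piece k t)).
  assert (Hbc : forall t, Rmin x0 x1 <= t <= Rmax x0 x1 -> continuity_pt bnd t).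
  { intros t Ht. unfold bnd. apply (cont_rsum n piece t). intros k Hk.
    destruct (dub_cont n E (open_rbar_interval a b) p (S k) t Sp ltac:(lia) (Hconv t Ht)) as [P1 [P2 [P3 [P4 P5]]]].
    destruct (dub_cont n E (open_rbar_interval a b) q (S k) t Sq ltac:(lia) (Hconv t Ht)) as [Q1 [Q2 [Q3 [Q4 Q5]]]].
    unfold piece. repeat apply contR_plus; apply cont_Cmod; auto. }
  destruct (continuity_ab_maj bnd (Rmin x0 x1) (Rmax x0 x1) (Rmin_Rmax x0 x1) Hbc) as [Mx [HMx HMxI]].
  set (M := bnd Mx + 1).
  assert (HM1 : 1 <= M). { unfold M, bnd. pose proof (rsum_nonneg n (fun k => piece k Mx) (fun k _ => Hpn k Mx)). lra. }
  assert (Hpc : forall t l, Rmin x0 x1 <= t <= Rmax x0 x1 -> (1 <= l <= n)%nat -> piece (pred l) t <= M).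
  { intros t l Ht Hl. eapply Rle_trans. apply (rsum_term_le n (fun k => piece k t)). intros; auto. lia.
    pose proof (HMx t Ht). unfold bnd in *. unfold M, bnd. lra. }
  set (L := Lc n E M).
  assert (HL : 0 <= L) by (apply Lc_nonneg; lra).
  set (Sd := fun t => Sdiff n (fun i => fst (p i t)) (fun i => fst (q i t)) (fun i => snd (p i t)) (fun i => snd (q i t))).
  assert (Hlip : forall t l, Rmin x0 x1 <= t <= Rmax x0 x1 -> (1 <= l <= n)%nat ->
     Cmod (Fz n p l t - Fz n q l t)%C <= L * Sd t /\ Cmod (Fy n E p l t - Fy n E q l t)%C <= L * Sd t).
  { intros t l Ht Hl.
    assert (Hpl := Hpc t l Ht Hl). unfold piece in Hpl. replace (S (pred l)) with l in Hpl by lia.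
    pose proof (Cmod_ge_0 (snd (q l t))). pose proof (Cmod_ge_0 (fst (p l t))). pose proof (Cmod_ge_0 (fst (q l t))).
    pose proof (Cmod_ge_0 (/ dub_denom n (fun i => p i t) l)%C). pose proof (Cmod_ge_0 (/ dub_denom n (fun i => q i t) l)%C).
    pose proof (Cmod_ge_0 (dRpoly n E (fst (q l t)))).
    destruct (dub_cont n E (open_rbar_interval a b) p l t Sp Hl (Hconv t Ht)) as [_ [_ [_ [_ P5]]]].
    destruct (dub_cont n E (open_rbar_interval a b) q l t Sq Hl (Hconv t Ht)) as [_ [_ [_ [_ Q5]]]].
    unfold Fz, Fy, Sd, L. unfold dub_denom in *.
    apply (lip_point n E l (fun i => fst (p i t)) (fun i => fst (q i t)) (fun i => snd (p i t)) (fun i => snd (q i t)) M); auto; try lra.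
    intros m Hm. assert (Hpm := Hpc t m Ht Hm). unfold piece in Hpm. replace (S (pred m)) with m in Hpm by lia.
    pose proof (Cmod_ge_0 (snd (q m t))). pose proof (Cmod_ge_0 (fst (p m t))). pose proof (Cmod_ge_0 (fst (q m t))).
    pose proof (Cmod_ge_0 (/ dub_denom n (fun i => p i t) m)%C). pose proof (Cmod_ge_0 (/ dub_denom n (fun i => q i t) m)%C).
    pose proof (Cmod_ge_0 (dRpoly n E (fst (q m t)))). unfold dub_denom in *. split; lra. }
  set (Dz := fun k t => (fst (p (S k) t) - fst (q (S k) t))%C).
  set (Dy := fun k t => (snd (p (S k) t) - snd (q (S k) t))%C).
  set (Dd := fun t => rsum n (fun k => nsq (Dz k t) + nsq (Dy k t))).
  set (dD := fun t => rsum n (fun k => 2 * dotp (Dz k t) (Fz n p (S k) t - Fz n q (S k) t)%C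
                                    + 2 * dotp (Dy k t) (Fy n E p (S k) t - Fy n E q (S k) t)%C)).
  assert (Hder : forall t, Rmin x0 x1 <= t <= Rmax x0 x1 -> is_derive Dd t (dD t)).
  { intros t Ht. unfold Dd, dD.
    apply (dR_rsum n (fun k t => nsq (Dz k t) + nsq (Dy k t))). intros k Hk.
    destruct (Sp (S k) ltac:(lia)) as [_ [_ Hp]]. destruct (Hp t (Hconv t Ht)) as [_ [_ [Dp1 Dp2]]].
    destruct (Sq (S k) ltac:(lia)) as [_ [_ Hq]]. destruct (Hq t (Hconv t Ht)) as [_ [_ [Dq1 Dq2]]].
    apply (dR_plus (fun t => nsq (Dz k t)) (fun t => nsq (Dy k t))); apply d_nsq; unfold Dz, Dy; apply dC_minus; auto. }
  assert (Hbd : forall t, Rmin x0 x1 <= t <= Rmax x0 x1 -> Rabs (dD t) <= (4 * L * INR n) * Dd t).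
  { intros t Ht.
    assert (Hs : Sd t = rsum n (fun k => Cmod (Dz k t) + Cmod (Dy k t))) by reflexivity.
    assert (HSn : 0 <= Sd t) by apply Sdiff_nonneg.
    assert (H1 : Rabs (dD t) <= rsum n (fun k => (2 * L * Sd t) * (Cmod (Dz k t) + Cmod (Dy k t)))).
    { unfold dD. eapply Rle_trans. apply rsum_abs. apply rsum_le. intros k Hk.
      destruct (Hlip t (S k) Ht ltac:(lia)) as [L1 L2].
      eapply Rle_trans. apply Rabs_triang. rewrite !Rabs_mult, Rabs_right by lra.
      pose proof (dotp_bound (Dz k t) (Fz n p (S k) t - Fz n q (S k) t)%C).
      pose proof (dotp_bound (Dy k t) (Fy n E p (S k) t - Fy n E q (S k) t)%C).
      pose proof (Cmod_ge_0 (Dz k t)). pose proof (Cmod_ge_0 (Dy k t)).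
      assert (Cmod (Dz k t) * Cmod (Fz n p (S k) t - Fz n q (S k) t)%C <= Cmod (Dz k t) * (L * Sd t))
        by (apply Rmult_le_compat_l; auto).
      assert (Cmod (Dy k t) * Cmod (Fy n E p (S k) t - Fy n E q (S k) t)%C <= Cmod (Dy k t) * (L * Sd t))
        by (apply Rmult_le_compat_l; auto).
      replace (2 * L * Sd t * (Cmod (Dz k t) + Cmod (Dy k t))) with
        (2 * (Cmod (Dz k t) * (L * Sd t)) + 2 * (Cmod (Dy k t) * (L * Sd t))) by ring.
      lra. }
    rewrite (rsum_scal n (fun k => Cmod (Dz k t) + Cmod (Dy k t)) (2 * L * Sd t)) in H1.
    rewrite <- Hs in H1.
    assert (H3 := rsum_CS n (fun k => Cmod (Dz k t) + Cmod (Dy k t))). rewrite <- Hs in H3.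
    assert (H4 : rsum n (fun k => (Cmod (Dz k t) + Cmod (Dy k t)) ^ 2) <= rsum n (fun k => 2 * (nsq (Dz k t) + nsq (Dy k t)))).
    { apply rsum_le. intros k Hk. rewrite !nsq_Cmod.
      pose proof (pow2_ge_0 (Cmod (Dz k t) - Cmod (Dy k t))). nra. }
    rewrite rsum_scal in H4. fold (Dd t) in H4.
    assert (Hn0 : 0 <= INR n) by apply pos_INR.
    assert (H5 : Sd t ^ 2 <= INR n * (2 * Dd t)).
    { eapply Rle_trans. apply H3. apply Rmult_le_compat_l; auto. }
    assert (H6 : 2 * L * Sd t * Sd t <= 2 * L * (INR n * (2 * Dd t))).
    { replace (2 * L * Sd t * Sd t) with (2 * L * Sd t ^ 2) by ring. apply Rmult_le_compat_l; lra. }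
    lra. }
  assert (Hnn : forall t, Rmin x0 x1 <= t <= Rmax x0 x1 -> 0 <= Dd t).
  { intros. apply rsum_nonneg. intros. pose proof (nsq_nonneg (Dz k t)). pose proof (nsq_nonneg (Dy k t)). lra. }
  assert (H0 : Dd x0 = 0).
  { unfold Dd. transitivity (rsum n (fun _ => 0)). apply rsum_ext. intros k Hk. unfold Dz, Dy.
    rewrite (Heq (S k)) by lia.
    replace (fst (q (S k) x0) - fst (q (S k) x0))%C with (RtoC 0) by ring.
    replace (snd (q (S k) x0) - snd (q (S k) x0))%C with (RtoC 0) by ring.
    unfold nsq, Re, Im; simpl; ring.
    clear. induction n; simpl; auto. rewrite IHn; ring. }
  assert (HD1 := gronwall Dd dD (4 * L * INR n) x0 x1 Hder Hbd Hnn H0).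
  assert (Hterm : nsq (Dz (pred j) x1) + nsq (Dy (pred j) x1) <= 0).
  { rewrite <- HD1. unfold Dd. apply (rsum_term_le n (fun k => nsq (Dz k x1) + nsq (Dy k x1))).
    intros. pose proof (nsq_nonneg (Dz k x1)). pose proof (nsq_nonneg (Dy k x1)). lra. lia. }
  pose proof (nsq_nonneg (Dz (pred j) x1)). pose proof (nsq_nonneg (Dy (pred j) x1)).
  assert (Z1 := nsq_zero (Dz (pred j) x1) ltac:(lra)).
  assert (Z2 := nsq_zero (Dy (pred j) x1) ltac:(lra)).
  unfold Dz, Dy in Z1, Z2. replace (S (pred j)) with j in Z1, Z2 by lia.
  apply Csub_zero in Z1. apply Csub_zero in Z2.
  destruct (p j x1), (q j x1); simpl in *; subst; auto. Qed.


Open Scope C_scope.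
Open Scope C_scope.

Lemma family_conclusion n E a b (r gt fb : nat -> R -> C) (alpha : R -> C) :
  (forall i, smoothC (gt i)) ->
  (forall z x, is_deriveC (fun t => cprod n (fun k => z - r (S k) t)) x
     (alpha x * cprod n (fun k => z - r (S k) x) - 2 * Ci * z * cpolyN gt n z x)) ->
  (forall z x, is_deriveC (fun t => cpolyN gt n z t) x
     (Ci * (cpolyN fb (S n) z x - cprod n (fun k => z - r (S k) x)))) ->
  (forall z x, z * z * cpolyN gt n z x * cpolyN gt n z x
     + z * cprod n (fun k => z - r (S k) x) * cpolyN fb (S n) z x = Rpoly n E z) ->
  (forall j x, (1 <= j <= n)%nat -> open_rbar_interval a b x -> continuousC_at (r j) x) ->
  (forall j l x, (1 <= j <= n)%nat -> (1 <= l <= n)%nat -> j <> l ->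
      open_rbar_interval a b x -> r j x <> r l x) ->
  lemma_conclusion n E (open_rbar_interval a b) r
     (fun j x => (r j x, - r j x * cpolyN gt n (r j x) x)).
Proof. intros Hg HA HG HR Hc Hd.
  assert (HD := family_deriv n r gt alpha (open_rbar_interval a b) HA Hc Hd).
  assert (HS := family_smooth n r gt (open_rbar_interval a b) Hg HD Hd).
  assert (HO := Om_open a b).
  assert (Hsol : dubrovin_solution n E (open_rbar_interval a b)
     (fun j x => (r j x, - r j x * cpolyN gt n (r j x) x))).
  { intros j Hj. split; [|split].
    - simpl. apply (CkC_smooth _ HO). intros k; apply HS; auto.
    - simpl. apply (CkC_smooth _ HO). intros k. apply CkC_mult. apply CkC_opp; apply HS; auto.
      apply CkC_Gcomp; auto.
    - intros x Hx. simpl. split; [|split; [|split]].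
      + rewrite <- (HR (r j x) x). rewrite (cprod_zero n (fun k => r j x - r (S k) x) (pred j)). ring.
        lia. replace (S (pred j)) with j by lia. ring.
      + intros l Hl Hne. apply Hd; auto.
      + apply HD; auto.
      + apply family_yderiv with (fb := fb); auto. }
  split; [|split].
  - intros j x Hj Hx. apply HD; auto.
  - exact Hsol.
  - intros x0 p Hx0 Sp Heq j x Hj Hx. apply (dub_unique n E a b p (fun j x => (r j x, - r j x * cpolyN gt n (r j x) x)) x0); auto.
Qed.


Open Scope C_scope.
Open Scope C_scope.

Lemma cpolyN_opp (g : nat -> R -> C) n z x : cpolyN (fun k x => - g k x) n z x = - cpolyN g n z x.
Proof. unfold cpolyN. rewrite <- csum_opp. apply csum_ext. intros; ring. Qed.

Lemma smoothC_opp (g : R -> C) : smoothC g -> smoothC (fun x => - g x).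
Proof. intros H. unfold smoothC. apply CkC_smooth.
  intros x _. exists (mkposreal 1 Rlt_0_1). intros; exact I.
  intros k. apply CkC_opp. apply smooth_CkC. exact H. Qed.

Theorem lemma3p2
  (n : nat) (u : R -> C) (f g h : nat -> R -> C) (E : nat -> C)
  (mu nu : nat -> R -> C) (a b : Rbar) :
  smoothC u ->
  (forall k, smoothC (f k)) -> (forall k, smoothC (g k)) -> (forall k, smoothC (h k)) ->
  (forall x, f 0%nat x = 1) -> (forall x, h 0%nat x = 1) ->
  (forall z x, is_deriveC (fun t => cpolyN f (S n) z t) x
     (- Ci * DeriveC u x * cpolyN f (S n) z x - 2 * Ci * z * cpolyN g n z x)) ->
  (forall z x, is_deriveC (fun t => cpolyN h (S n) z t) x
     (Ci * DeriveC u x * cpolyN h (S n) z x + 2 * Ci * z * cpolyN g n z x)) ->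
  (forall z x, is_deriveC (fun t => cpolyN g n z t) x
     (Ci * (cpolyN h (S n) z x - cpolyN f (S n) z x))) ->
  (forall z x, z * z * cpolyN g n z x * cpolyN g n z x
                 + z * cpolyN f (S n) z x * cpolyN h (S n) z x = Rpoly n E z) ->
  E 0%nat = 0 ->
  (forall p q, (p <= 2 * n)%nat -> (q <= 2 * n)%nat -> E p = E q -> p = q) ->
  (forall z x, cpolyN f (S n) z x = cprod n (fun k => z - mu (S k) x)) ->
  (forall z x, cpolyN h (S n) z x = cprod n (fun k => z - nu (S k) x)) ->
  ((forall j x, (1 <= j <= n)%nat -> open_rbar_interval a b x -> continuousC_at (mu j) x) ->
   (forall j l x, (1 <= j <= n)%nat -> (1 <= l <= n)%nat -> j <> l ->
      open_rbar_interval a b x -> mu j x <> mu l x) ->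
   lemma_conclusion n E (open_rbar_interval a b) mu
     (fun j x => (mu j x, - mu j x * cpolyN g n (mu j x) x)))
  /\
  ((forall j x, (1 <= j <= n)%nat -> open_rbar_interval a b x -> continuousC_at (nu j) x) ->
   (forall j l x, (1 <= j <= n)%nat -> (1 <= l <= n)%nat -> j <> l ->
      open_rbar_interval a b x -> nu j x <> nu l x) ->
   lemma_conclusion n E (open_rbar_interval a b) nu
     (fun j x => (nu j x, nu j x * cpolyN g n (nu j x) x))).
Proof.
  intros Hu Hf Hg Hh Hf0 Hh0 HFx HHx HGx HR HE0 HEd HF HH. split.
  - intros Hc Hd.
    apply (family_conclusion n E a b mu g h (fun x => - Ci * DeriveC u x)); auto.
    + intros z x. eapply dC_eq. eapply dC_ext. 2: apply (HFx z x). intros t; apply HF.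
      rewrite HF. ring.
    + intros z x. rewrite <- HF. apply HGx.
    + intros z x. rewrite <- HF. apply HR.
  - intros Hc Hd.
    replace (fun j x => (nu j x, nu j x * cpolyN g n (nu j x) x)) with
      (fun j x => (nu j x, - nu j x * cpolyN (fun k x => - g k x) n (nu j x) x)).
    2:{ apply functional_extensionality; intros j. apply functional_extensionality; intros x.
        rewrite cpolyN_opp. f_equal. ring. }
    apply (family_conclusion n E a b nu (fun k x => - g k x) f (fun x => Ci * DeriveC u x)); auto.
    + intros k. apply smoothC_opp; auto.
    + intros z x. eapply dC_eq. eapply dC_ext. 2: apply (HHx z x). intros t; apply HH.
      rewrite HH, cpolyN_opp. ring.
    + intros z x. eapply dC_eq. eapply dC_ext. 2: apply (dC_opp _ _ _ (HGx z x)).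
      intros t. cbv beta. rewrite cpolyN_opp. reflexivity.
      rewrite <- HH. ring.
    + intros z x. rewrite cpolyN_opp, <- HH, <- (HR z x). ring.
Qed.
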